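(* Let $a,b,c,p\in\mathbb{C}$ with $-c\notin\mathbb{N}\cup\{0\}$ and $c\neq2$. Suppose that $\cosh(pz)F(a,b;c;z)=\sum_{n=0}^\infty u_nz^n$ for $|z|<1$. Then $u_0=1$, $u_1=\frac{ab}{c}$, $u_2=\frac{(a)_2(b)_2}{2(c)_2}+\frac{p^2}{2}$, $u_3=\frac{abp^2}{2c}+\frac{(a)_3(b)_3}{6(c)_3}$, $u_4=\frac{(a)_2(b)_2p^2}{4(c)_2}+\frac{(a)_4(b)_4}{24(c)_4}+\frac{p^4}{24}$, $u_5=\frac{abp^4}{24c}+\frac{(a)_3(b)_3p^2}{12(c)_3}+\frac{(a)_5(b)_5}{120(c)_5}$, $u_6=\frac{(a)_2(b)_2p^4}{48(c)_2}+\frac{(a)_4(b)_4p^2}{48(c)_4}+\frac{(a)_6(b)_6}{720(c)_6}+\frac{p^6}{720}$, $u_7=\frac{abp^6}{720c}+\frac{(a)_3(b)_3p^4}{144(c)_3}+\frac{(a)_5(b)_5p^2}{240(c)_5}+\frac{(a)_7(b)_7}{5040(c)_7}$, $u_8=\frac{(a)_2(b)_2p^6}{1440(c)_2}+\frac{(a)_4(b)_4p^4}{576(c)_4}+\frac{(a)_6(b)_6p^2}{1440(c)_6}+\frac{(a)_8(b)_8}{40320(c)_8}+\frac{p^8}{40320}$, $u_9=\frac{abp^8}{40320c}+\frac{(a)_3(b)_3p^6}{4320(c)_3}+\frac{(a)_5(b)_5p^4}{2880(c)_5}+\frac{(a)_7(b)_7p^2}{10080(c)_7}+\frac{(a)_9(b)_9}{362880(c)_9}$,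 and for all integers $n\ge9$, \[ u_{n+1}=\sum_{i=0}^9\delta_i(n)u_{n-i}, \] where $D(n)=(c-2)c\,n(n+1)(c+n-1)(c+n)$ and \[ \delta_0(n)=\frac{2(n-1)^2\left(a(c-2b)+c(b+c-3)\right)+4(c-2)(n-1)\left(c(a+b)-ab\right)+2ab(c-2)(c+1)}{(c-2)c(n+1)(c+n)}, \] \[ \begin{aligned} \delta_1(n)=\frac{1}{D(n)}\Big[&-(n-4)(n-3)(n-2)(n-1)\left(a^2+4c(a+b)-10ab+b^2+c^2-6c-4p^2-1\right)\\ &+2(n-3)(n-2)(n-1)\Big(a^2(4b-3c)+a\left(2(b-1)c+4b(b+3)-3c^2\right)-c\left(b(3b+3c+2)+c-4p^2-13\right)\Big)\\ &+(n-2)(n-1)\Big(a^2\left(8b^2+b(4c+6)-6c^2+c\right)+a\left(-(10b+7)c^2+4(b(b+3)+3)c+6b(b+1)\right)\\ &\qquad+c\left(b^2(1-6c)+b(12-7c)+6(c-2)p^2+c+11\right)\Big)\\ &+(c-2)\left(a^2b(c-b(c+2))+ab(b+1)c+c^2(c+1)p^2\right)\\ &+2(n-1)\left(a^2b(b(4c-2)-3(c-1)c)-abc(3b(c-1)+c-5)+(c-2)c(c+1)p^2\right)\Big], \end{aligned} \] \[ \begin{aligned} \delta_2(n)=\frac{2}{D(n)}\Big[&(n-5)(n-4)(n-3)(n-2)\left(a^2+a(c-4b)+(b-1)(b+c+1)-8p^2\right)\\ &+(n-4)(n-3)(n-2)\Big(a^3+a^2(-5b+3c+2)-a\left(b(5b-2c+14)-3c+4p^2+1\right)+(b+3c+1)\left(b^2+b-4p^2-2\right)\Big)\\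 &-(n-3)(n-2)\Big(a^3(b-2c)+a^2(b(10b+9)-4(b+1)c)+a\left(b(b+1)(b-4c+8)+6cp^2+2c\right)\\ &\qquad+2c\left(-b^3-2b^2+3p^2(b+c-3)+b+2\right)\Big)\\ &-(n-2)\Big(a^3b(4b-3c+2)+a^2b(2b+1)(2b-c)-a\left(p^2(10b-3c^2+c)+(b-1)b(b(3c-2)+4c-2)\right)\\ &\qquad+cp^2\left(b(3c-1)+c^2-9\right)\Big)\\ &-(c+1)p^2\left(c^2(2a+2b+1)-3(a+1)(b+1)c+4ab\right)\\ &-(a-1)a(b-1)b\left(-c(a+b+1)+2ab+a+b+1\right)\Big], \end{aligned} \] \[ \begin{aligned} \delta_3(n)=-\frac{1}{D(n)}\Big[&(n-6)(n-5)(n-4)(n-3)\left((a-b)^2-24p^2-1\right)\\ &+2(n-5)(n-4)(n-3)\Big(a^3-a^2(b-2)-a\left(b(b+4)+12p^2+1\right)+b^3+2b^2-12p^2(b+c+1)-b-2\Big)\\ &+(n-4)(n-3)\Big(a^4+a^3(2b+3)-a^2\left(6b^2+3b+6p^2-1\right)+a\left(-12p^2(b+2c)+b(b(2b-3)-8)-3\right)\\ &\qquad-6p^2\left(b^2+4bc+(c-6)c-1\right)+(b+1)^2\left(b^2+b-2\right)+8p^4\Big)\\ &+2(n-3)\Big(-p^2\left(c^2(3a+3b+1)+c(a+b)(3a+3b+2)-40ab-13c\right)+ab(a-b-1)(a-b+1)(a+b)+4cp^4\Big)\\ &+a^4(b-1)b+a^3b(-2b^2+b+1)+a^2\left(b^4+b^3+p^2\left(-12b^2+2b(6c+5)-6c^2+c\right)-3b^2+b\right)\\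 &+ap^2\left(-(6b+7)c^2+4(b(3b+2)+3)c+2b(5b-11)\right)\\ &-a(b-1)^2b(b+1)+cp^2\left(b^2(1-6c)+b(12-7c)+5(c-2)p^2+c+11\right)\Big], \end{aligned} \] \[ \begin{aligned} \delta_4(n)=\frac{2p^2}{D(n)}\Big[&-8(n-7)(n-6)(n-5)(n-4)-4(n-6)(n-5)(n-4)\left(3(a+b+1)+c\right)\\ &+2(n-5)(n-4)\left(8p^2-3(a+b-1)(a+b+c+1)\right)\\ &+(n-4)\Big(-a^3-a^2(3b+3c+2)+a\left(b(-3b-6c+46)-3c+4p^2+1\right)-(b+3c+1)\left(b^2+b-4p^2-2\right)\Big)\\ &+a^3(3b-2c)+a^2(3(5-2b)b-4c)+a\left(p^2(5c-6b)-4bc+3b(b(b+5)-4)+2c\right)\\ &+5cp^2(b+c-3)-2(b-1)(b+1)(b+2)c\Big], \end{aligned} \] \[ \begin{aligned} \delta_5(n)=\frac{p^2}{D(n)}\Big[&4(n-8)(n-7)(n-6)(n-5)+8(n-7)(n-6)(n-5)(a+b+1)\\ &+6(n-6)(n-5)\left((a+b)^2-8p^2-1\right)\\ &-2(n-5)\left(-a^3-3a^2b-2a^2-3ab^2+12p^2(a+b+c+1)+16ab+a-b^3-2b^2+b+2\right)\\ &+a^4+a^3(3-2b)+a^2\left(b(6b-11)-5p^2+1\right)-a\left(2b^3+11b^2-2b(13p^2+6)+20cp^2+3\right)\\ &-5p^2\left(b^2+4bc+(c-6)c-1\right)+(b+1)^2\left(b^2+b-2\right)+4p^4\Big], \end{aligned}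 \] \[ \delta_6(n)=\frac{2p^4\left(5a^2+a(-8b+5c+12n-72)+5b^2+5bc+12b(n-6)+4n(c+4n)-29c-196n-8p^2+595\right)}{D(n)}, \] \[ \delta_7(n)=\frac{p^4\left(-5a^2+2a(b-4n+28)-5b^2-8b(n-7)-8(n-14)n+24p^2-387\right)}{D(n)}, \] \[ \delta_8(n)=-\frac{16p^6}{D(n)},\qquad \delta_9(n)=\frac{4p^6}{D(n)}. \]
   Context: For $a\in\mathbb{C}$, $(a)_n=a(a+1)\cdots(a+n-1)$ denotes the Pochhammer symbol, with $(a)_0=1$. For $a,b,c\in\mathbb{C}$ with $-c\notin\mathbb{N}\cup\{0\}$, the Gaussian hypergeometric function is $F(a,b;c;z)=\sum_{n=0}^\infty \frac{(a)_n(b)_n}{(c)_n\,n!}z^n$, $|z|<1$. *)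

(* Defs.v *)
From HB Require Import structures.
From mathcomp Require Import all_boot all_order all_algebra.
From mathcomp Require Import all_classical all_reals all_analysis.
From mathcomp Require Import complex.
Import Order.TTheory GRing.Theory Num.Theory.
Import ComplexField.
Import numFieldTopology.Exports numFieldNormedType.Exports.

Set Implicit Arguments.
Unset Strict Implicit.
Unset Printing Implicit Defensive.

Local Open Scope classical_set_scope.
Local Open Scope ring_scope.

(* The complex numbers R[i] with their usual (modulus) norm and the induced
   topology, so that convergence of complex series can be stated. *)
HB.instance Definition _ (R : rcfType) := NormedModule.copy R[i] (R[i])^o.

Section Defs.
Variable R : realType.
Local Notation C := R[i].

Definition poch (a : C) (n : nat) : C := \prod_(k < n) (a + k%:R).

Definition hypF (a b c z : C) : C :=
  limn (series (fun n : nat => poch a n * poch b n / (poch c n * n`!%:R) * z ^+ n)).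

Definition ccosh (w : C) : C :=
  limn (series (fun k : nat => w ^+ (2 * k) / (2 * k)`!%:R)).

Definition Dn (c : C) (n : nat) : C :=
  let N : C := n%:R in (c - 2) * c * N * (N + 1) * (c + N - 1) * (c + N).

Definition delta0 (a b c p : C) (n : nat) : C :=
  let N : C := n%:R in
  (2 * (N - 1) ^+ 2 * (a * (c - 2 * b) + c * (b + c - 3))
   + 4 * (c - 2) * (N - 1) * (c * (a + b) - a * b)
   + 2 * a * b * (c - 2) * (c + 1))
  / ((c - 2) * c * (N + 1) * (c + N)).

Definition delta1 (a b c p : C) (n : nat) : C :=
  let N : C := n%:R in
  1 / Dn c n *
  ( - (N - 4) * (N - 3) * (N - 2) * (N - 1)
        * (a ^+ 2 + 4 * c * (a + b) - 10 * a * b + b ^+ 2 + c ^+ 2 - 6 * c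
           - 4 * p ^+ 2 - 1)
    + 2 * (N - 3) * (N - 2) * (N - 1)
        * (a ^+ 2 * (4 * b - 3 * c)
           + a * (2 * (b - 1) * c + 4 * b * (b + 3) - 3 * c ^+ 2)
           - c * (b * (3 * b + 3 * c + 2) + c - 4 * p ^+ 2 - 13))
    + (N - 2) * (N - 1)
        * (a ^+ 2 * (8 * b ^+ 2 + b * (4 * c + 6) - 6 * c ^+ 2 + c)
           + a * (- (10 * b + 7) * c ^+ 2 + 4 * (b * (b + 3) + 3) * c
                  + 6 * b * (b + 1))
           + c * (b ^+ 2 * (1 - 6 * c) + b * (12 - 7 * c)
                  + 6 * (c - 2) * p ^+ 2 + c + 11))
    + (c - 2) * (a ^+ 2 * b * (c - b * (c + 2)) + a * b * (b + 1) * c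
                 + c ^+ 2 * (c + 1) * p ^+ 2)
    + 2 * (N - 1)
        * (a ^+ 2 * b * (b * (4 * c - 2) - 3 * (c - 1) * c)
           - a * b * c * (3 * b * (c - 1) + c - 5)
           + (c - 2) * c * (c + 1) * p ^+ 2)).

Definition delta2 (a b c p : C) (n : nat) : C :=
  let N : C := n%:R in
  2 / Dn c n *
  ( (N - 5) * (N - 4) * (N - 3) * (N - 2)
        * (a ^+ 2 + a * (c - 4 * b) + (b - 1) * (b + c + 1) - 8 * p ^+ 2)
    + (N - 4) * (N - 3) * (N - 2)
        * (a ^+ 3 + a ^+ 2 * (- 5 * b + 3 * c + 2)
           - a * (b * (5 * b - 2 * c + 14) - 3 * c + 4 * p ^+ 2 + 1)
           + (b + 3 * c + 1) * (b ^+ 2 + b - 4 * p ^+ 2 - 2))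
    - (N - 3) * (N - 2)
        * (a ^+ 3 * (b - 2 * c) + a ^+ 2 * (b * (10 * b + 9) - 4 * (b + 1) * c)
           + a * (b * (b + 1) * (b - 4 * c + 8) + 6 * c * p ^+ 2 + 2 * c)
           + 2 * c * (- b ^+ 3 - 2 * b ^+ 2 + 3 * p ^+ 2 * (b + c - 3) + b + 2))
    - (N - 2)
        * (a ^+ 3 * b * (4 * b - 3 * c + 2) + a ^+ 2 * b * (2 * b + 1) * (2 * b - c)
           - a * (p ^+ 2 * (10 * b - 3 * c ^+ 2 + c)
                  + (b - 1) * b * (b * (3 * c - 2) + 4 * c - 2))
           + c * p ^+ 2 * (b * (3 * c - 1) + c ^+ 2 - 9))
    - (c + 1) * p ^+ 2 * (c ^+ 2 * (2 * a + 2 * b + 1) - 3 * (a + 1) * (b + 1) * c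
                          + 4 * a * b)
    - (a - 1) * a * (b - 1) * b * (- c * (a + b + 1) + 2 * a * b + a + b + 1)).

Definition delta3 (a b c p : C) (n : nat) : C :=
  let N : C := n%:R in
  - (1 / Dn c n) *
  ( (N - 6) * (N - 5) * (N - 4) * (N - 3) * ((a - b) ^+ 2 - 24 * p ^+ 2 - 1)
    + 2 * (N - 5) * (N - 4) * (N - 3)
        * (a ^+ 3 - a ^+ 2 * (b - 2) - a * (b * (b + 4) + 12 * p ^+ 2 + 1)
           + b ^+ 3 + 2 * b ^+ 2 - 12 * p ^+ 2 * (b + c + 1) - b - 2)
    + (N - 4) * (N - 3)
        * (a ^+ 4 + a ^+ 3 * (2 * b + 3)
           - a ^+ 2 * (6 * b ^+ 2 + 3 * b + 6 * p ^+ 2 - 1)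
           + a * (- 12 * p ^+ 2 * (b + 2 * c) + b * (b * (2 * b - 3) - 8) - 3)
           - 6 * p ^+ 2 * (b ^+ 2 + 4 * b * c + (c - 6) * c - 1)
           + (b + 1) ^+ 2 * (b ^+ 2 + b - 2) + 8 * p ^+ 4)
    + 2 * (N - 3)
        * (- p ^+ 2 * (c ^+ 2 * (3 * a + 3 * b + 1)
                       + c * (a + b) * (3 * a + 3 * b + 2) - 40 * a * b - 13 * c)
           + a * b * (a - b - 1) * (a - b + 1) * (a + b) + 4 * c * p ^+ 4)
    + a ^+ 4 * (b - 1) * b + a ^+ 3 * b * (- 2 * b ^+ 2 + b + 1)
    + a ^+ 2 * (b ^+ 4 + b ^+ 3
                + p ^+ 2 * (- 12 * b ^+ 2 + 2 * b * (6 * c + 5) - 6 * c ^+ 2 + c)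
                - 3 * b ^+ 2 + b)
    + a * p ^+ 2 * (- (6 * b + 7) * c ^+ 2 + 4 * (b * (3 * b + 2) + 3) * c
                    + 2 * b * (5 * b - 11))
    - a * (b - 1) ^+ 2 * b * (b + 1)
    + c * p ^+ 2 * (b ^+ 2 * (1 - 6 * c) + b * (12 - 7 * c) + 5 * (c - 2) * p ^+ 2
                    + c + 11)).

Definition delta4 (a b c p : C) (n : nat) : C :=
  let N : C := n%:R in
  2 * p ^+ 2 / Dn c n *
  ( - 8 * (N - 7) * (N - 6) * (N - 5) * (N - 4)
    - 4 * (N - 6) * (N - 5) * (N - 4) * (3 * (a + b + 1) + c)
    + 2 * (N - 5) * (N - 4) * (8 * p ^+ 2 - 3 * (a + b - 1) * (a + b + c + 1))
    + (N - 4)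
        * (- a ^+ 3 - a ^+ 2 * (3 * b + 3 * c + 2)
           + a * (b * (- 3 * b - 6 * c + 46) - 3 * c + 4 * p ^+ 2 + 1)
           - (b + 3 * c + 1) * (b ^+ 2 + b - 4 * p ^+ 2 - 2))
    + a ^+ 3 * (3 * b - 2 * c) + a ^+ 2 * (3 * (5 - 2 * b) * b - 4 * c)
    + a * (p ^+ 2 * (5 * c - 6 * b) - 4 * b * c + 3 * b * (b * (b + 5) - 4) + 2 * c)
    + 5 * c * p ^+ 2 * (b + c - 3) - 2 * (b - 1) * (b + 1) * (b + 2) * c).

Definition delta5 (a b c p : C) (n : nat) : C :=
  let N : C := n%:R in
  p ^+ 2 / Dn c n *
  ( 4 * (N - 8) * (N - 7) * (N - 6) * (N - 5)
    + 8 * (N - 7) * (N - 6) * (N - 5) * (a + b + 1)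
    + 6 * (N - 6) * (N - 5) * ((a + b) ^+ 2 - 8 * p ^+ 2 - 1)
    - 2 * (N - 5)
        * (- a ^+ 3 - 3 * a ^+ 2 * b - 2 * a ^+ 2 - 3 * a * b ^+ 2
           + 12 * p ^+ 2 * (a + b + c + 1) + 16 * a * b + a - b ^+ 3
           - 2 * b ^+ 2 + b + 2)
    + a ^+ 4 + a ^+ 3 * (3 - 2 * b) + a ^+ 2 * (b * (6 * b - 11) - 5 * p ^+ 2 + 1)
    - a * (2 * b ^+ 3 + 11 * b ^+ 2 - 2 * b * (13 * p ^+ 2 + 6) + 20 * c * p ^+ 2 + 3)
    - 5 * p ^+ 2 * (b ^+ 2 + 4 * b * c + (c - 6) * c - 1)
    + (b + 1) ^+ 2 * (b ^+ 2 + b - 2) + 4 * p ^+ 4).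

Definition delta6 (a b c p : C) (n : nat) : C :=
  let N : C := n%:R in
  2 * p ^+ 4 * (5 * a ^+ 2 + a * (- 8 * b + 5 * c + 12 * N - 72) + 5 * b ^+ 2
                + 5 * b * c + 12 * b * (N - 6) + 4 * N * (c + 4 * N) - 29 * c
                - 196 * N - 8 * p ^+ 2 + 595)
  / Dn c n.

Definition delta7 (a b c p : C) (n : nat) : C :=
  let N : C := n%:R in
  p ^+ 4 * (- 5 * a ^+ 2 + 2 * a * (b - 4 * N + 28) - 5 * b ^+ 2 - 8 * b * (N - 7)
            - 8 * (N - 14) * N + 24 * p ^+ 2 - 387)
  / Dn c n.

Definition delta8 (a b c p : C) (n : nat) : C := - (16 * p ^+ 6 / Dn c n).

Definition delta9 (a b c p : C) (n : nat) : C := 4 * p ^+ 6 / Dn c n.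

Definition delta (i : nat) (a b c p : C) (n : nat) : C :=
  match i with
  | 0 => delta0 a b c p n
  | 1 => delta1 a b c p n
  | 2 => delta2 a b c p n
  | 3 => delta3 a b c p n
  | 4 => delta4 a b c p n
  | 5 => delta5 a b c p n
  | 6 => delta6 a b c p n
  | 7 => delta7 a b c p n
  | 8 => delta8 a b c p n
  | 9 => delta9 a b c p n
  | _ => 0
  end.

End Defs.

(* Main.v *)
Require Import Defs.
From HB Require Import structures.
From mathcomp Require Import all_boot all_order all_algebra.
From mathcomp Require Import all_classical all_reals all_analysis.
From mathcomp Require Import complex.
From mathcomp Require Import ring lra.
Import Order.TTheory GRing.Theory Num.Theory.
Import ComplexField.
Import numFieldTopology.Exports numFieldNormedType.Exports.
Local Open Scope classical_set_scope.
Local Open Scope ring_scope.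
Local Open Scope complex_scope.

Section Proof.
Variable R : realType.
Local Notation C := R[i].

Definition DnN (c N : C) : C := (c - 2) * c * N * (N + 1) * (c + N - 1) * (c + N).

Definition dN0 (a b c p N : C) : C :=
  (2 * (N - 1) ^+ 2 * (a * (c - 2 * b) + c * (b + c - 3))
   + 4 * (c - 2) * (N - 1) * (c * (a + b) - a * b)
   + 2 * a * b * (c - 2) * (c + 1))
  / ((c - 2) * c * (N + 1) * (c + N)).

Definition dN1 (a b c p N : C) : C :=
  1 / DnN c N *
  ( - (N - 4) * (N - 3) * (N - 2) * (N - 1)
        * (a ^+ 2 + 4 * c * (a + b) - 10 * a * b + b ^+ 2 + c ^+ 2 - 6 * c
           - 4 * p ^+ 2 - 1)
    + 2 * (N - 3) * (N - 2) * (N - 1)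
        * (a ^+ 2 * (4 * b - 3 * c)
           + a * (2 * (b - 1) * c + 4 * b * (b + 3) - 3 * c ^+ 2)
           - c * (b * (3 * b + 3 * c + 2) + c - 4 * p ^+ 2 - 13))
    + (N - 2) * (N - 1)
        * (a ^+ 2 * (8 * b ^+ 2 + b * (4 * c + 6) - 6 * c ^+ 2 + c)
           + a * (- (10 * b + 7) * c ^+ 2 + 4 * (b * (b + 3) + 3) * c
                  + 6 * b * (b + 1))
           + c * (b ^+ 2 * (1 - 6 * c) + b * (12 - 7 * c)
                  + 6 * (c - 2) * p ^+ 2 + c + 11))
    + (c - 2) * (a ^+ 2 * b * (c - b * (c + 2)) + a * b * (b + 1) * c
                 + c ^+ 2 * (c + 1) * p ^+ 2)
    + 2 * (N - 1)
        * (a ^+ 2 * b * (b * (4 * c - 2) - 3 * (c - 1) * c)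
           - a * b * c * (3 * b * (c - 1) + c - 5)
           + (c - 2) * c * (c + 1) * p ^+ 2)).

Definition dN2 (a b c p N : C) : C :=
  2 / DnN c N *
  ( (N - 5) * (N - 4) * (N - 3) * (N - 2)
        * (a ^+ 2 + a * (c - 4 * b) + (b - 1) * (b + c + 1) - 8 * p ^+ 2)
    + (N - 4) * (N - 3) * (N - 2)
        * (a ^+ 3 + a ^+ 2 * (- 5 * b + 3 * c + 2)
           - a * (b * (5 * b - 2 * c + 14) - 3 * c + 4 * p ^+ 2 + 1)
           + (b + 3 * c + 1) * (b ^+ 2 + b - 4 * p ^+ 2 - 2))
    - (N - 3) * (N - 2)
        * (a ^+ 3 * (b - 2 * c) + a ^+ 2 * (b * (10 * b + 9) - 4 * (b + 1) * c)
           + a * (b * (b + 1) * (b - 4 * c + 8) + 6 * c * p ^+ 2 + 2 * c)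
           + 2 * c * (- b ^+ 3 - 2 * b ^+ 2 + 3 * p ^+ 2 * (b + c - 3) + b + 2))
    - (N - 2)
        * (a ^+ 3 * b * (4 * b - 3 * c + 2) + a ^+ 2 * b * (2 * b + 1) * (2 * b - c)
           - a * (p ^+ 2 * (10 * b - 3 * c ^+ 2 + c)
                  + (b - 1) * b * (b * (3 * c - 2) + 4 * c - 2))
           + c * p ^+ 2 * (b * (3 * c - 1) + c ^+ 2 - 9))
    - (c + 1) * p ^+ 2 * (c ^+ 2 * (2 * a + 2 * b + 1) - 3 * (a + 1) * (b + 1) * c
                          + 4 * a * b)
    - (a - 1) * a * (b - 1) * b * (- c * (a + b + 1) + 2 * a * b + a + b + 1)).

Definition dN3 (a b c p N : C) : C :=
  - (1 / DnN c N) *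
  ( (N - 6) * (N - 5) * (N - 4) * (N - 3) * ((a - b) ^+ 2 - 24 * p ^+ 2 - 1)
    + 2 * (N - 5) * (N - 4) * (N - 3)
        * (a ^+ 3 - a ^+ 2 * (b - 2) - a * (b * (b + 4) + 12 * p ^+ 2 + 1)
           + b ^+ 3 + 2 * b ^+ 2 - 12 * p ^+ 2 * (b + c + 1) - b - 2)
    + (N - 4) * (N - 3)
        * (a ^+ 4 + a ^+ 3 * (2 * b + 3)
           - a ^+ 2 * (6 * b ^+ 2 + 3 * b + 6 * p ^+ 2 - 1)
           + a * (- 12 * p ^+ 2 * (b + 2 * c) + b * (b * (2 * b - 3) - 8) - 3)
           - 6 * p ^+ 2 * (b ^+ 2 + 4 * b * c + (c - 6) * c - 1)
           + (b + 1) ^+ 2 * (b ^+ 2 + b - 2) + 8 * p ^+ 4)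
    + 2 * (N - 3)
        * (- p ^+ 2 * (c ^+ 2 * (3 * a + 3 * b + 1)
                       + c * (a + b) * (3 * a + 3 * b + 2) - 40 * a * b - 13 * c)
           + a * b * (a - b - 1) * (a - b + 1) * (a + b) + 4 * c * p ^+ 4)
    + a ^+ 4 * (b - 1) * b + a ^+ 3 * b * (- 2 * b ^+ 2 + b + 1)
    + a ^+ 2 * (b ^+ 4 + b ^+ 3
                + p ^+ 2 * (- 12 * b ^+ 2 + 2 * b * (6 * c + 5) - 6 * c ^+ 2 + c)
                - 3 * b ^+ 2 + b)
    + a * p ^+ 2 * (- (6 * b + 7) * c ^+ 2 + 4 * (b * (3 * b + 2) + 3) * c
                    + 2 * b * (5 * b - 11))
    - a * (b - 1) ^+ 2 * b * (b + 1)
    + c * p ^+ 2 * (b ^+ 2 * (1 - 6 * c) + b * (12 - 7 * c) + 5 * (c - 2) * p ^+ 2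
                    + c + 11)).

Definition dN4 (a b c p N : C) : C :=
  2 * p ^+ 2 / DnN c N *
  ( - 8 * (N - 7) * (N - 6) * (N - 5) * (N - 4)
    - 4 * (N - 6) * (N - 5) * (N - 4) * (3 * (a + b + 1) + c)
    + 2 * (N - 5) * (N - 4) * (8 * p ^+ 2 - 3 * (a + b - 1) * (a + b + c + 1))
    + (N - 4)
        * (- a ^+ 3 - a ^+ 2 * (3 * b + 3 * c + 2)
           + a * (b * (- 3 * b - 6 * c + 46) - 3 * c + 4 * p ^+ 2 + 1)
           - (b + 3 * c + 1) * (b ^+ 2 + b - 4 * p ^+ 2 - 2))
    + a ^+ 3 * (3 * b - 2 * c) + a ^+ 2 * (3 * (5 - 2 * b) * b - 4 * c)
    + a * (p ^+ 2 * (5 * c - 6 * b) - 4 * b * c + 3 * b * (b * (b + 5) - 4) + 2 * c)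
    + 5 * c * p ^+ 2 * (b + c - 3) - 2 * (b - 1) * (b + 1) * (b + 2) * c).

Definition dN5 (a b c p N : C) : C :=
  p ^+ 2 / DnN c N *
  ( 4 * (N - 8) * (N - 7) * (N - 6) * (N - 5)
    + 8 * (N - 7) * (N - 6) * (N - 5) * (a + b + 1)
    + 6 * (N - 6) * (N - 5) * ((a + b) ^+ 2 - 8 * p ^+ 2 - 1)
    - 2 * (N - 5)
        * (- a ^+ 3 - 3 * a ^+ 2 * b - 2 * a ^+ 2 - 3 * a * b ^+ 2
           + 12 * p ^+ 2 * (a + b + c + 1) + 16 * a * b + a - b ^+ 3
           - 2 * b ^+ 2 + b + 2)
    + a ^+ 4 + a ^+ 3 * (3 - 2 * b) + a ^+ 2 * (b * (6 * b - 11) - 5 * p ^+ 2 + 1)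
    - a * (2 * b ^+ 3 + 11 * b ^+ 2 - 2 * b * (13 * p ^+ 2 + 6) + 20 * c * p ^+ 2 + 3)
    - 5 * p ^+ 2 * (b ^+ 2 + 4 * b * c + (c - 6) * c - 1)
    + (b + 1) ^+ 2 * (b ^+ 2 + b - 2) + 4 * p ^+ 4).

Definition dN6 (a b c p N : C) : C :=
  2 * p ^+ 4 * (5 * a ^+ 2 + a * (- 8 * b + 5 * c + 12 * N - 72) + 5 * b ^+ 2
                + 5 * b * c + 12 * b * (N - 6) + 4 * N * (c + 4 * N) - 29 * c
                - 196 * N - 8 * p ^+ 2 + 595)
  / DnN c N.

Definition dN7 (a b c p N : C) : C :=
  p ^+ 4 * (- 5 * a ^+ 2 + 2 * a * (b - 4 * N + 28) - 5 * b ^+ 2 - 8 * b * (N - 7)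
            - 8 * (N - 14) * N + 24 * p ^+ 2 - 387)
  / DnN c N.

Definition dN8 (a b c p N : C) : C :=
  - (16 * p ^+ 6 / DnN c N).

Definition dN9 (a b c p N : C) : C :=
  4 * p ^+ 6 / DnN c N.

Lemma core_poly (a b c q N y0 y1 y2 y3 y4 y5 y6 y7 y8 y9 y10 : C) :
  DnN c N * y10 - (N * (c + N - 1) * ((2 * (N - 1) ^+ 2 * (a * (c - 2 * b) + c * (b + c - 3))
   + 4 * (c - 2) * (N - 1) * (c * (a + b) - a * b)
   + 2 * a * b * (c - 2) * (c + 1))) * y9 + (1 *
  ( - (N - 4) * (N - 3) * (N - 2) * (N - 1)
        * (a ^+ 2 + 4 * c * (a + b) - 10 * a * b + b ^+ 2 + c ^+ 2 - 6 * c
           - 4 * q ^+ 2 - 1)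
    + 2 * (N - 3) * (N - 2) * (N - 1)
        * (a ^+ 2 * (4 * b - 3 * c)
           + a * (2 * (b - 1) * c + 4 * b * (b + 3) - 3 * c ^+ 2)
           - c * (b * (3 * b + 3 * c + 2) + c - 4 * q ^+ 2 - 13))
    + (N - 2) * (N - 1)
        * (a ^+ 2 * (8 * b ^+ 2 + b * (4 * c + 6) - 6 * c ^+ 2 + c)
           + a * (- (10 * b + 7) * c ^+ 2 + 4 * (b * (b + 3) + 3) * c
                  + 6 * b * (b + 1))
           + c * (b ^+ 2 * (1 - 6 * c) + b * (12 - 7 * c)
                  + 6 * (c - 2) * q ^+ 2 + c + 11))
    + (c - 2) * (a ^+ 2 * b * (c - b * (c + 2)) + a * b * (b + 1) * c
                 + c ^+ 2 * (c + 1) * q ^+ 2)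
    + 2 * (N - 1)
        * (a ^+ 2 * b * (b * (4 * c - 2) - 3 * (c - 1) * c)
           - a * b * c * (3 * b * (c - 1) + c - 5)
           + (c - 2) * c * (c + 1) * q ^+ 2))) * y8 + (2 *
  ( (N - 5) * (N - 4) * (N - 3) * (N - 2)
        * (a ^+ 2 + a * (c - 4 * b) + (b - 1) * (b + c + 1) - 8 * q ^+ 2)
    + (N - 4) * (N - 3) * (N - 2)
        * (a ^+ 3 + a ^+ 2 * (- 5 * b + 3 * c + 2)
           - a * (b * (5 * b - 2 * c + 14) - 3 * c + 4 * q ^+ 2 + 1)
           + (b + 3 * c + 1) * (b ^+ 2 + b - 4 * q ^+ 2 - 2))
    - (N - 3) * (N - 2)
        * (a ^+ 3 * (b - 2 * c) + a ^+ 2 * (b * (10 * b + 9) - 4 * (b + 1) * c)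
           + a * (b * (b + 1) * (b - 4 * c + 8) + 6 * c * q ^+ 2 + 2 * c)
           + 2 * c * (- b ^+ 3 - 2 * b ^+ 2 + 3 * q ^+ 2 * (b + c - 3) + b + 2))
    - (N - 2)
        * (a ^+ 3 * b * (4 * b - 3 * c + 2) + a ^+ 2 * b * (2 * b + 1) * (2 * b - c)
           - a * (q ^+ 2 * (10 * b - 3 * c ^+ 2 + c)
                  + (b - 1) * b * (b * (3 * c - 2) + 4 * c - 2))
           + c * q ^+ 2 * (b * (3 * c - 1) + c ^+ 2 - 9))
    - (c + 1) * q ^+ 2 * (c ^+ 2 * (2 * a + 2 * b + 1) - 3 * (a + 1) * (b + 1) * c
                          + 4 * a * b)
    - (a - 1) * a * (b - 1) * b * (- c * (a + b + 1) + 2 * a * b + a + b + 1))) * y7 + (- (1) *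
  ( (N - 6) * (N - 5) * (N - 4) * (N - 3) * ((a - b) ^+ 2 - 24 * q ^+ 2 - 1)
    + 2 * (N - 5) * (N - 4) * (N - 3)
        * (a ^+ 3 - a ^+ 2 * (b - 2) - a * (b * (b + 4) + 12 * q ^+ 2 + 1)
           + b ^+ 3 + 2 * b ^+ 2 - 12 * q ^+ 2 * (b + c + 1) - b - 2)
    + (N - 4) * (N - 3)
        * (a ^+ 4 + a ^+ 3 * (2 * b + 3)
           - a ^+ 2 * (6 * b ^+ 2 + 3 * b + 6 * q ^+ 2 - 1)
           + a * (- 12 * q ^+ 2 * (b + 2 * c) + b * (b * (2 * b - 3) - 8) - 3)
           - 6 * q ^+ 2 * (b ^+ 2 + 4 * b * c + (c - 6) * c - 1)
           + (b + 1) ^+ 2 * (b ^+ 2 + b - 2) + 8 * q ^+ 4)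
    + 2 * (N - 3)
        * (- q ^+ 2 * (c ^+ 2 * (3 * a + 3 * b + 1)
                       + c * (a + b) * (3 * a + 3 * b + 2) - 40 * a * b - 13 * c)
           + a * b * (a - b - 1) * (a - b + 1) * (a + b) + 4 * c * q ^+ 4)
    + a ^+ 4 * (b - 1) * b + a ^+ 3 * b * (- 2 * b ^+ 2 + b + 1)
    + a ^+ 2 * (b ^+ 4 + b ^+ 3
                + q ^+ 2 * (- 12 * b ^+ 2 + 2 * b * (6 * c + 5) - 6 * c ^+ 2 + c)
                - 3 * b ^+ 2 + b)
    + a * q ^+ 2 * (- (6 * b + 7) * c ^+ 2 + 4 * (b * (3 * b + 2) + 3) * c
                    + 2 * b * (5 * b - 11))
    - a * (b - 1) ^+ 2 * b * (b + 1)
    + c * q ^+ 2 * (b ^+ 2 * (1 - 6 * c) + b * (12 - 7 * c) + 5 * (c - 2) * q ^+ 2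
                    + c + 11))) * y6 + (2 * q ^+ 2 *
  ( - 8 * (N - 7) * (N - 6) * (N - 5) * (N - 4)
    - 4 * (N - 6) * (N - 5) * (N - 4) * (3 * (a + b + 1) + c)
    + 2 * (N - 5) * (N - 4) * (8 * q ^+ 2 - 3 * (a + b - 1) * (a + b + c + 1))
    + (N - 4)
        * (- a ^+ 3 - a ^+ 2 * (3 * b + 3 * c + 2)
           + a * (b * (- 3 * b - 6 * c + 46) - 3 * c + 4 * q ^+ 2 + 1)
           - (b + 3 * c + 1) * (b ^+ 2 + b - 4 * q ^+ 2 - 2))
    + a ^+ 3 * (3 * b - 2 * c) + a ^+ 2 * (3 * (5 - 2 * b) * b - 4 * c)
    + a * (q ^+ 2 * (5 * c - 6 * b) - 4 * b * c + 3 * b * (b * (b + 5) - 4) + 2 * c)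
    + 5 * c * q ^+ 2 * (b + c - 3) - 2 * (b - 1) * (b + 1) * (b + 2) * c)) * y5 + (q ^+ 2 *
  ( 4 * (N - 8) * (N - 7) * (N - 6) * (N - 5)
    + 8 * (N - 7) * (N - 6) * (N - 5) * (a + b + 1)
    + 6 * (N - 6) * (N - 5) * ((a + b) ^+ 2 - 8 * q ^+ 2 - 1)
    - 2 * (N - 5)
        * (- a ^+ 3 - 3 * a ^+ 2 * b - 2 * a ^+ 2 - 3 * a * b ^+ 2
           + 12 * q ^+ 2 * (a + b + c + 1) + 16 * a * b + a - b ^+ 3
           - 2 * b ^+ 2 + b + 2)
    + a ^+ 4 + a ^+ 3 * (3 - 2 * b) + a ^+ 2 * (b * (6 * b - 11) - 5 * q ^+ 2 + 1)
    - a * (2 * b ^+ 3 + 11 * b ^+ 2 - 2 * b * (13 * q ^+ 2 + 6) + 20 * c * q ^+ 2 + 3)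
    - 5 * q ^+ 2 * (b ^+ 2 + 4 * b * c + (c - 6) * c - 1)
    + (b + 1) ^+ 2 * (b ^+ 2 + b - 2) + 4 * q ^+ 4)) * y4 + (2 * q ^+ 4 * (5 * a ^+ 2 + a * (- 8 * b + 5 * c + 12 * N - 72) + 5 * b ^+ 2
                + 5 * b * c + 12 * b * (N - 6) + 4 * N * (c + 4 * N) - 29 * c
                - 196 * N - 8 * q ^+ 2 + 595)
 ) * y3 + (q ^+ 4 * (- 5 * a ^+ 2 + 2 * a * (b - 4 * N + 28) - 5 * b ^+ 2 - 8 * b * (N - 7)
            - 8 * (N - 14) * N + 24 * q ^+ 2 - 387)
 ) * y2 + (- (16 * q ^+ 6)) * y1 + (4 * q ^+ 6) * y0) =
  (2 * N * c - 3 * N * c ^+ 2 + N * c ^+ 3 - 2 * N ^+ 2 * c + N ^+ 2 * c ^+ 2) * ((N + 1) * (N + c) * y10 - ((N * (N - 1) + 2 * q * N + c * q + (a + b + 1) * N + a * b) * y9 - (2 * q * (N - 1) + q ^+ 2 + (a + b + 1) * q) * y8 + q ^+ 2 * y7)) + (6 * c - 2 * c ^+ 2 - 2 * c ^+ 2 * q + c ^+ 3 * q - 10 * b * c + 4 * b * c ^+ 2 - 10 * a * c + 4 * a * c ^+ 2 + 16 * a * b - 4 * a * b * c - a * b * c ^+ 2 - 12 * N * c - 4 * N * c * q + 4 * N * c ^+ 2 + 2 * N * c ^+ 2 * q + 10 * N * b * c - 3 * N * b * c ^+ 2 + 10 * N * a * c - 3 * N * a * c ^+ 2 - 16 * N *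 a * b + 4 * N * a * b * c + 4 * N ^+ 2 * c - N ^+ 2 * c ^+ 2 - 2 * N ^+ 2 * b * c - 2 * N ^+ 2 * a * c + 4 * N ^+ 2 * a * b) * (((N - 1) + 1) * ((N - 1) + c) * y9 - (((N - 1) * ((N - 1) - 1) + 2 * q * (N - 1) + c * q + (a + b + 1) * (N - 1) + a * b) * y8 - (2 * q * ((N - 1) - 1) + q ^+ 2 + (a + b + 1) * q) * y7 + q ^+ 2 * y6)) + (- 12 - 48 * q ^+ 2 - 8 * c - 6 * c * q + 10 * c * q ^+ 2 + c ^+ 2 * q + c ^+ 2 * q ^+ 2 + 16 * b * c + 10 * b * c * q - 3 * b * c ^+ 2 * q + 12 * b ^+ 2 - 8 * b ^+ 2 * c + 16 * a * c + 10 * a * c * q - 3 * a * c ^+ 2 * q - 46 * a * b - 16 * a * b * q - 6 * a * b * c + 4 * a * b * c * q + 10 * a * b ^+ 2 + 2 * a * b ^+ 2 * c + 12 * a ^+ 2 - 8 * a ^+ 2 * c + 10 * a ^+ 2 * b + 2 * a ^+ 2 * b * c - 4 * a ^+ 2 * b ^+ 2 + 7 * N + 28 * N * q ^+ 2 + 9 * N * c + 8 * N * c * q - 4 * N * c * q ^+ 2 - 2 * N * c ^+ 2 * q - 12 * N * b * c - 4 * N * b * c * q - 7 * N * b ^+ 2 + 3 * N * b ^+ 2 * c - 12 * N * a * c - 4 * N * a * c * q + 34 * N * a * b + 8 * N * a * b * q + 2 * N * a * b * c - 4 * N * a * b ^+ 2 - 7 * N * a ^+ 2 + 3 * N * a ^+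 2 * c - 4 * N * a ^+ 2 * b - N ^+ 2 - 4 * N ^+ 2 * q ^+ 2 - 2 * N ^+ 2 * c + 2 * N ^+ 2 * b * c + N ^+ 2 * b ^+ 2 + 2 * N ^+ 2 * a * c - 6 * N ^+ 2 * a * b + N ^+ 2 * a ^+ 2) * (((N - 2) + 1) * ((N - 2) + c) * y8 - (((N - 2) * ((N - 2) - 1) + 2 * q * (N - 2) + c * q + (a + b + 1) * (N - 2) + a * b) * y7 - (2 * q * ((N - 2) - 1) + q ^+ 2 + (a + b + 1) * q) * y6 + q ^+ 2 * y5)) + (16 + 8 * q + 256 * q ^+ 2 + 32 * q ^+ 3 + 5 * c * q - 32 * c * q ^+ 2 - 4 * c * q ^+ 3 - c ^+ 2 * q ^+ 2 - 4 * b - 16 * b * q ^+ 2 - 8 * b * c * q - 2 * b * c * q ^+ 2 - 16 * b ^+ 2 - 8 * b ^+ 2 * q + 3 * b ^+ 2 * c * q + 4 * b ^+ 3 - 4 * a - 16 * a * q ^+ 2 - 8 * a * c * q - 2 * a * c * q ^+ 2 + 33 * a * b + 28 * a * b * q + 8 * a * b * q ^+ 2 + 2 * a * b * c * q - 4 * a * b ^+ 2 - 4 * a * b ^+ 2 * q - a * b ^+ 3 - 16 * a ^+ 2 - 8 * a ^+ 2 * q + 3 * a ^+ 2 * c * q - 4 * a ^+ 2 * b - 4 * a ^+ 2 * b * q + 2 * a ^+ 2 * b ^+ 2 + 4 * a ^+ 3 - a ^+ 3 * b - 8 * N - 2 * N * q - 112 * N * q ^+ 2 - 8 * N * q ^+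 3 - 4 * N * c * q + 8 * N * c * q ^+ 2 + N * b + 4 * N * b * q ^+ 2 + 4 * N * b * c * q + 8 * N * b ^+ 2 + 2 * N * b ^+ 2 * q - N * b ^+ 3 + N * a + 4 * N * a * q ^+ 2 + 4 * N * a * c * q - 16 * N * a * b - 12 * N * a * b * q + N * a * b ^+ 2 + 8 * N * a ^+ 2 + 2 * N * a ^+ 2 * q + N * a ^+ 2 * b - N * a ^+ 3 + N ^+ 2 + 12 * N ^+ 2 * q ^+ 2 - N ^+ 2 * b ^+ 2 + 2 * N ^+ 2 * a * b - N ^+ 2 * a ^+ 2) * (((N - 3) + 1) * ((N - 3) + c) * y7 - (((N - 3) * ((N - 3) - 1) + 2 * q * (N - 3) + c * q + (a + b + 1) * (N - 3) + a * b) * y6 - (2 * q * ((N - 3) - 1) + q ^+ 2 + (a + b + 1) * q) * y5 + q ^+ 2 * y4)) + (- 7 * q - 405 * q ^+ 2 - 124 * q ^+ 3 - 4 * q ^+ 4 + 22 * c * q ^+ 2 + 8 * c * q ^+ 3 + b * q + 44 * b * q ^+ 2 + 4 * b * q ^+ 3 + 2 * b * c * q ^+ 2 + 7 * b ^+ 2 * q + b ^+ 2 * q ^+ 2 - b ^+ 3 * q + a * q + 44 * a * q ^+ 2 + 4 * a * q ^+ 3 + 2 * a * c * q ^+ 2 - 14 * a * b * q - 14 * a * b * q ^+ 2 + a * b ^+ 2 * q + 7 * a ^+ 2 * q + a ^+ 2 * q ^+ 2 + a ^+ 2 * b * q - a ^+ 3 * q + 2 * N * q + 140 * N * q ^+ 2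 + 24 * N * q ^+ 3 - 4 * N * c * q ^+ 2 - 8 * N * b * q ^+ 2 - 2 * N * b ^+ 2 * q - 8 * N * a * q ^+ 2 + 4 * N * a * b * q - 2 * N * a ^+ 2 * q - 12 * N ^+ 2 * q ^+ 2) * (((N - 4) + 1) * ((N - 4) + c) * y6 - (((N - 4) * ((N - 4) - 1) + 2 * q * (N - 4) + c * q + (a + b + 1) * (N - 4) + a * b) * y5 - (2 * q * ((N - 4) - 1) + q ^+ 2 + (a + b + 1) * q) * y4 + q ^+ 2 * y3)) + (197 * q ^+ 2 + 152 * q ^+ 3 + 12 * q ^+ 4 - 4 * c * q ^+ 3 - 28 * b * q ^+ 2 - 8 * b * q ^+ 3 - b ^+ 2 * q ^+ 2 - 28 * a * q ^+ 2 - 8 * a * q ^+ 3 + 6 * a * b * q ^+ 2 - a ^+ 2 * q ^+ 2 - 56 * N * q ^+ 2 - 24 * N * q ^+ 3 + 4 * N * b * q ^+ 2 + 4 * N * a * q ^+ 2 + 4 * N ^+ 2 * q ^+ 2) * (((N - 5) + 1) * ((N - 5) + c) * y5 - (((N - 5) * ((N - 5) - 1) + 2 * q * (N - 5) + c * q + (a + b + 1) * (N - 5) + a * b) * y4 - (2 * q * ((N - 5) - 1) + q ^+ 2 + (a + b + 1) * q) * y3 + q ^+ 2 * y2)) + (- 60 * q ^+ 3 - 12 * q ^+ 4 + 4 * b * q ^+ 3 + 4 * a * q ^+ 3 + 8 * N * q ^+ 3) * (((N - 6) + 1) * ((N - 6) + c) * y4 - (((N - 6) * ((N - 6) - 1)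 + 2 * q * (N - 6) + c * q + (a + b + 1) * (N - 6) + a * b) * y3 - (2 * q * ((N - 6) - 1) + q ^+ 2 + (a + b + 1) * q) * y2 + q ^+ 2 * y1)) + (4 * q ^+ 4) * (((N - 7) + 1) * ((N - 7) + c) * y3 - (((N - 7) * ((N - 7) - 1) + 2 * q * (N - 7) + c * q + (a + b + 1) * (N - 7) + a * b) * y2 - (2 * q * ((N - 7) - 1) + q ^+ 2 + (a + b + 1) * q) * y1 + q ^+ 2 * y0)).
Proof. rewrite /DnN. ring. Qed.

Lemma core (a b c q N y0 y1 y2 y3 y4 y5 y6 y7 y8 y9 y10 : C) :
  c - 2 != 0 -> c != 0 -> N != 0 -> N + 1 != 0 -> c + N - 1 != 0 -> c + N != 0 ->
  (N + 1) * (N + c) * y10 = (N * (N - 1) + 2 * q * N + c * q + (a + b + 1) * N + a * b) * y9 - (2 * q * (N - 1) + q ^+ 2 + (a + b + 1) * q) * y8 + q ^+ 2 * y7 ->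
  ((N - 1) + 1) * ((N - 1) + c) * y9 = ((N - 1) * ((N - 1) - 1) + 2 * q * (N - 1) + c * q + (a + b + 1) * (N - 1) + a * b) * y8 - (2 * q * ((N - 1) - 1) + q ^+ 2 + (a + b + 1) * q) * y7 + q ^+ 2 * y6 ->
  ((N - 2) + 1) * ((N - 2) + c) * y8 = ((N - 2) * ((N - 2) - 1) + 2 * q * (N - 2) + c * q + (a + b + 1) * (N - 2) + a * b) * y7 - (2 * q * ((N - 2) - 1) + q ^+ 2 + (a + b + 1) * q) * y6 + q ^+ 2 * y5 ->
  ((N - 3) + 1) * ((N - 3) + c) * y7 = ((N - 3) * ((N - 3) - 1) + 2 * q * (N - 3) + c * q + (a + b + 1) * (N - 3) + a * b) * y6 - (2 * q * ((N - 3) - 1) + q ^+ 2 + (a + b + 1) * q) * y5 + q ^+ 2 * y4 ->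
  ((N - 4) + 1) * ((N - 4) + c) * y6 = ((N - 4) * ((N - 4) - 1) + 2 * q * (N - 4) + c * q + (a + b + 1) * (N - 4) + a * b) * y5 - (2 * q * ((N - 4) - 1) + q ^+ 2 + (a + b + 1) * q) * y4 + q ^+ 2 * y3 ->
  ((N - 5) + 1) * ((N - 5) + c) * y5 = ((N - 5) * ((N - 5) - 1) + 2 * q * (N - 5) + c * q + (a + b + 1) * (N - 5) + a * b) * y4 - (2 * q * ((N - 5) - 1) + q ^+ 2 + (a + b + 1) * q) * y3 + q ^+ 2 * y2 ->
  ((N - 6) + 1) * ((N - 6) + c) * y4 = ((N - 6) * ((N - 6) - 1) + 2 * q * (N - 6) + c * q + (a + b + 1) * (N - 6) + a * b) * y3 - (2 * q * ((N - 6) - 1) + q ^+ 2 + (a + b + 1) * q) * y2 + q ^+ 2 * y1 ->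
  ((N - 7) + 1) * ((N - 7) + c) * y3 = ((N - 7) * ((N - 7) - 1) + 2 * q * (N - 7) + c * q + (a + b + 1) * (N - 7) + a * b) * y2 - (2 * q * ((N - 7) - 1) + q ^+ 2 + (a + b + 1) * q) * y1 + q ^+ 2 * y0 ->
  y10 = dN0 a b c q N * y9 + dN1 a b c q N * y8 + dN2 a b c q N * y7 + dN3 a b c q N * y6 + dN4 a b c q N * y5 + dN5 a b c q N * y4 + dN6 a b c q N * y3 + dN7 a b c q N * y2 + dN8 a b c q N * y1 + dN9 a b c q N * y0.
Proof.
move=> h1 h2 h3 h4 h5 h6 H0 H1 H2 H3 H4 H5 H6 H7.
have hD : DnN c N != 0 by rewrite /DnN !mulf_neq0.
have E := core_poly a b c q N y0 y1 y2 y3 y4 y5 y6 y7 y8 y9 y10.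
rewrite H0 H1 H2 H3 H4 H5 H6 H7 !subrr !mulr0 !addr0 in E.
move/eqP: E; rewrite subr_eq0 => /eqP E.
apply: (mulfI hD). rewrite E.
rewrite /dN0 /dN1 /dN2 /dN3 /dN4 /dN5 /dN6 /dN7 /dN8 /dN9 /DnN.
by field; rewrite ?h1 ?h2 ?h3 ?h4 ?h5 ?h6.
Qed.

Definition Qrel (a b c q : C) (y : nat -> C) (m : nat) : Prop :=
  (m%:R + 1) * (m%:R + c) * y m.+1 =
  (m%:R * (m%:R - 1) + 2 * q * m%:R + c * q + (a + b + 1) * m%:R + a * b) * y m
  - (2 * q * (m%:R - 1) + q ^+ 2 + (a + b + 1) * q) * y m.-1 + q ^+ 2 * y m.-2.

Lemma rec_main (a b c q : C) (y : nat -> C) (n : nat) : (9 <= n)%N -> c != 2 -> c != 0 ->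
  c + n%:R - 1 != 0 -> c + n%:R != 0 ->
  (forall m, (2 <= m)%N -> Qrel a b c q y m) ->
  y n.+1 = \sum_(i < 10) delta i a b c q n * y (n - i)%N.
Proof.
case: n => [|[|[|[|[|[|[|[|[|k]]]]]]]]] // _ hc2 hc0 h5 h6 HQ.
rewrite !big_ord_recr big_ord0 /= add0r.
set N : C := (9 + k)%:R.
have e1 : (8 + k)%:R = N - 1 :> C by rewrite /N !natrD; ring.
have e2 : (7 + k)%:R = N - 2 :> C by rewrite /N !natrD; ring.
have e3 : (6 + k)%:R = N - 3 :> C by rewrite /N !natrD; ring.
have e4 : (5 + k)%:R = N - 4 :> C by rewrite /N !natrD; ring.
have e5 : (4 + k)%:R = N - 5 :> C by rewrite /N !natrD; ring.
have e6 : (3 + k)%:R = N - 6 :> C by rewrite /N !natrD; ring.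
have e7 : (2 + k)%:R = N - 7 :> C by rewrite /N !natrD; ring.
rewrite !subSS !subn0.
have d0 : delta0 a b c q (9 + k) = dN0 a b c q N by [].
have d1 : delta1 a b c q (9 + k) = dN1 a b c q N by [].
have d2 : delta2 a b c q (9 + k) = dN2 a b c q N by [].
have d3 : delta3 a b c q (9 + k) = dN3 a b c q N by [].
have d4 : delta4 a b c q (9 + k) = dN4 a b c q N by [].
have d5 : delta5 a b c q (9 + k) = dN5 a b c q N by [].
have d6 : delta6 a b c q (9 + k) = dN6 a b c q N by [].
have d7 : delta7 a b c q (9 + k) = dN7 a b c q N by [].
have d8 : delta8 a b c q (9 + k) = dN8 a b c q N by [].
have d9 : delta9 a b c q (9 + k) = dN9 a b c q N by [].
rewrite d0 d1 d2 d3 d4 d5 d6 d7 d8 d9.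
have H0 := HQ (9 + k)%N isT.
have H1 := HQ (8 + k)%N isT.
have H2 := HQ (7 + k)%N isT.
have H3 := HQ (6 + k)%N isT.
have H4 := HQ (5 + k)%N isT.
have H5 := HQ (4 + k)%N isT.
have H6 := HQ (3 + k)%N isT.
have H7 := HQ (2 + k)%N isT.
rewrite /Qrel -/N in H0.
rewrite /Qrel e1 in H1.
rewrite /Qrel e2 in H2.
rewrite /Qrel e3 in H3.
rewrite /Qrel e4 in H4.
rewrite /Qrel e5 in H5.
rewrite /Qrel e6 in H6.
rewrite /Qrel e7 in H7.
refine (core a b c q N (y (0 + k)%N) (y (1 + k)%N) (y (2 + k)%N) (y (3 + k)%N) (y (4 + k)%N) (y (5 + k)%N) (y (6 + k)%N) (y (7 + k)%N) (y (8 + k)%N) (y (9 + k)%N) (y (10 + k)%N) _ _ _ _ _ _ H0 H1 H2 H3 H4 H5 H6 H7).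
- by rewrite subr_eq0.
- by [].
- by rewrite /N pnatr_eq0.
- by rewrite /N natr1 pnatr_eq0.
- exact: h5.
- exact: h6.
Qed.

Definition tt (a b c : C) (m : nat) : C := poch a m * poch b m / (poch c m * m`!%:R).
Definition ee (q : C) (j : nat) : C := q ^+ j / j`!%:R.
Definition yy (a b c q : C) (n : nat) : C := \sum_(j < n.+1) ee q j * tt a b c (n - j).

Lemma pochS (x : C) m : poch x m.+1 = poch x m * (x + m%:R).
Proof. by rewrite /poch big_ord_recr. Qed.

Lemma fact_neq0 m : (m`!%:R : C) != 0.
Proof. by rewrite pnatr_eq0 -lt0n fact_gt0. Qed.

Lemma eeS q j : ee q j.+1 * j.+1%:R = q * ee q j.
Proof.
rewrite /ee factS natrM exprS.
have h1 := fact_neq0 j.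
have h2 : (1 + j%:R : C) != 0 by rewrite nat1r pnatr_eq0.
by field; rewrite h1 h2.
Qed.

Lemma poch_neq0 (c : C) : (forall k : nat, c != - k%:R) -> forall m, poch c m != 0.
Proof.
move=> hc m; rewrite /poch; apply/prodf_neq0 => i _.
by rewrite addr_eq0.
Qed.

Lemma ttS a b c m : poch c m.+1 != 0 ->
  tt a b c m.+1 * ((m%:R + 1) * (m%:R + c)) = (m%:R + a) * (m%:R + b) * tt a b c m.
Proof.
move=> hc; have hc' := hc; rewrite pochS mulf_eq0 negb_or in hc'.
case/andP: hc' => h1 h2.
rewrite /tt !pochS factS natrM.
have h3 := fact_neq0 m.
have h4 : (m.+1%:R : C) != 0 by rewrite pnatr_eq0.
rewrite -natr1 in h4 *.
by field; rewrite h1 h2 h3 h4.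
Qed.

Lemma expand2 K (F : nat -> C) x y :
  \sum_(j < K.+1) F j * (((K - j)%:R + x) * ((K - j)%:R + y)) =
  (K%:R + x) * (K%:R + y) * (\sum_(j < K.+1) F j)
  - (2 * K%:R + x + y) * (\sum_(j < K.+1) j%:R * F j)
  + \sum_(j < K.+1) j%:R ^+ 2 * F j.
Proof.
rewrite !mulr_sumr -sumrB -big_split /=. apply: eq_bigr => j _.
rewrite natrB; last by rewrite -ltnS.
ring.
Qed.

Lemma S1 a b c q n :
  \sum_(j < n.+2) j%:R * (ee q j * tt a b c (n.+1 - j)) = q * yy a b c q n.
Proof.
rewrite big_ord_recl /= mul0r add0r /yy mulr_sumr.
apply: eq_bigr => j _.
by rewrite /bump /= add1n subSS mulrA [_%:R * _]mulrC eeS mulrA.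
Qed.

Lemma S2 a b c q n :
  \sum_(j < n.+3) j%:R ^+ 2 * (ee q j * tt a b c (n.+2 - j)) =
  q * (q * yy a b c q n + yy a b c q n.+1).
Proof.
rewrite big_ord_recl /= expr0n /= mul0r add0r.
rewrite -S1 /yy -big_split /= mulr_sumr.
apply: eq_bigr => j _.
rewrite /bump /= add1n subSS expr2.
rewrite -[(j.+1%:R * j.+1%:R * _)]mulrA [j.+1%:R * (ee q j.+1 * _)]mulrA.
rewrite [j.+1%:R * ee q j.+1]mulrC eeS -natr1.
ring.
Qed.

Lemma S3 a b c q n : (forall m, poch c m != 0) ->
  \sum_(j < n.+2) ee q j * tt a b c (n.+1 - j) * (((n.+1 - j)%:R + 0) * ((n.+1 - j)%:R + (c - 1)))
  = \sum_(j < n.+1) ee q j * tt a b c (n - j) * (((n - j)%:R + a) * ((n - j)%:R + b)).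
Proof.
move=> hc.
rewrite big_ord_recr /= subnn addr0 mul0r mulr0 addr0.
apply: eq_bigr => j _.
rewrite /= subSn; last by rewrite -ltnS.
rewrite -mulrA -mulrA; congr (_ * _).
rewrite -natr1 addr0 -addrA [1 + _]addrC subrK.
by rewrite ttS ?hc // mulrC.
Qed.

Lemma eq_from (x y x' y' : C) : x' = y' -> x - y = x' - y' -> x = y.
Proof. by move=> -> /eqP; rewrite subrr subr_eq0 => /eqP. Qed.

Lemma yyQ a b c q : (forall m, poch c m != 0) -> forall m, (2 <= m)%N -> Qrel a b c q (yy a b c q) m.
Proof.
move=> hc [|[|n]] // _.
have E := S3 a b c q n.+2 hc.
rewrite (expand2 n.+3 (fun j => ee q j * tt a b c (n.+3 - j))) in E.
rewrite (expand2 n.+2 (fun j => ee q j * tt a b c (n.+2 - j))) in E.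
rewrite S1 S2 S1 S2 in E.
rewrite -[\sum_(j < n.+4) _]/(yy a b c q n.+3) -[\sum_(j < n.+3) _]/(yy a b c q n.+2) in E.
rewrite /Qrel /=.
apply: (eq_from _ _ _ _ E).
ring.
Qed.

Lemma ltc0 (e : C) : 0 < e -> 0 < complex.Re e /\ e = (complex.Re e)%:C.
Proof. case: e => x y; rewrite ltcE /= => /andP[/eqP -> h]. by split. Qed.
Arguments ltc0 {e}.

Lemma cvg_bound (f : nat -> C) (l : C) (g : nat -> R) :
  g @ \oo --> (0:R) -> (forall n, `|f n - l| <= (g n)%:C) -> f @ \oo --> l.
Proof.
move=> hg hb; apply/cvgrPdist_lt => e e0.
have [er0 ee] := ltc0 e0.
move/cvgrPdist_lt: hg => /(_ _ er0).
apply: filterS => n hn.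
rewrite distrC (le_lt_trans (hb n)) // ee ltcR.
rewrite sub0r normrN in hn. exact: le_lt_trans (ler_norm _) hn.
Qed.

Lemma ReD (x y : C) : complex.Re (x + y) = complex.Re x + complex.Re y. Proof. by case: x; case: y. Qed.
Lemma ImD (x y : C) : complex.Im (x + y) = complex.Im x + complex.Im y. Proof. by case: x; case: y. Qed.
Lemma ReB (x y : C) : complex.Re (x - y) = complex.Re x - complex.Re y. Proof. by case: x; case: y. Qed.
Lemma ImB (x y : C) : complex.Im (x - y) = complex.Im x - complex.Im y. Proof. by case: x; case: y. Qed.

Lemma Re_sum n (f : nat -> C) : complex.Re (\sum_(k < n) f k) = \sum_(k < n) complex.Re (f k).
Proof. elim: n => [|n IH]; first by rewrite !big_ord0. by rewrite !big_ord_recr ReD IH. Qed.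
Lemma Im_sum n (f : nat -> C) : complex.Im (\sum_(k < n) f k) = \sum_(k < n) complex.Im (f k).
Proof. elim: n => [|n IH]; first by rewrite !big_ord0. by rewrite !big_ord_recr ImD IH. Qed.

Lemma sqrt_le_add (x y : R) : Num.sqrt (x ^+ 2 + y ^+ 2) <= `|x| + `|y|.
Proof.
rewrite -(@ger0_norm _ (`|x| + `|y|)) ?addr_ge0 // -sqrtr_sqr.
apply: ler_wsqrtr.
rewrite -[x ^+ 2](real_normK (num_real x)) -[y ^+ 2](real_normK (num_real y)).
have := normr_ge0 x; have := normr_ge0 y. nra.
Qed.

Lemma norm_ReIm (z : C) : `|z| <= (`|complex.Re z| + `|complex.Im z|)%:C.
Proof. by rewrite normc_def lecR sqrt_le_add. Qed.

Lemma Re_le (z : C) : (`|complex.Re z|)%:C <= `|z|.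
Proof. exact: normc_ge_Re. Qed.

Lemma Im_le (z : C) : (`|complex.Im z|)%:C <= `|z|.
Proof.
rewrite normc_def lecR -sqrtr_sqr. apply: ler_wsqrtr.
by rewrite lerDr sqr_ge0.
Qed.

Lemma geo_cvg (w : nat -> C) (A s : R) : 0 <= s < 1 ->
  (forall n, `|w n| <= (A * s ^+ n)%:C) -> exists l : C, series w @ \oo --> l.
Proof.
move=> /andP[s0 s1] hw.
have hA n : 0 <= A * s ^+ n.
  by move: (le_trans (normr_ge0 (w n)) (hw n)); rewrite -[X in X <= _]/(0%:C) lecR.
have cv (h : C -> R) : (forall z, (`|h z|)%:C <= `|z|) -> cvgn (series (fun n => h (w n))).
  move=> hh; apply: (@normed_cvg _ R).
  apply: (@series_le_cvg _ _ (geometric A s)).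
  - by move=> n; rewrite normr_ge0.
  - by move=> n; exact: hA.
  - by move=> n; rewrite /= -lecR (le_trans (hh _) (hw n)).
  - by apply: is_cvg_geometric_series; rewrite ger0_norm.
have cRe := cv _ Re_le. have cIm := cv _ Im_le.
exists (limn (series (fun n => complex.Re (w n))) +i* limn (series (fun n => complex.Im (w n)))).
apply: (cvg_bound _ _ (fun n => `|series (fun n => complex.Re (w n)) n - limn (series (fun n => complex.Re (w n)))|
   + `|series (fun n => complex.Im (w n)) n - limn (series (fun n => complex.Im (w n)))|)).
- have -> : (0:R) = `|0 : R| + `|0 : R| by rewrite normr0 addr0.
  apply: cvgD; apply: cvg_norm.
  + rewrite -(subrr (limn (series (fun n => complex.Re (w n))))).
    apply: cvgB => //; exact: cvg_cst.
  + rewrite -(subrr (limn (series (fun n => complex.Im (w n))))).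
    apply: cvgB => //; exact: cvg_cst.
- move=> n; apply: le_trans (norm_ReIm _) _.
  by rewrite lecR /= !seriesEord /= ReB ImB Re_sum Im_sum.
Qed.

Lemma normC_real (x : R) : `|x%:C| = (`|x|)%:C.
Proof. by rewrite normc_def /= expr0n /= addr0 sqrtr_sqr. Qed.

Lemma cvg_expC (x : R) : 0 <= x < 1 -> (fun N => (x%:C) ^+ N) @ \oo --> 0.
Proof.
move=> /andP[x0 x1].
apply: (cvg_bound _ _ (fun N => x ^+ N)).
- by apply: cvg_expr; rewrite ger0_norm.
- by move=> n; rewrite subr0 normrX normC_real ger0_norm // rmorphXn.
Qed.

Lemma cvg_boundC (f : nat -> C) (l : C) (h : nat -> C) :
  h @ \oo --> 0 -> (forall n, `|f n - l| <= h n) -> f @ \oo --> l.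
Proof.
move=> hh hb; apply/cvgrPdist_lt => e e0.
move/cvgrPdist_lt: hh => /(_ _ e0).
apply: filterS => n hn.
rewrite sub0r normrN in hn.
rewrite distrC (le_lt_trans (hb n)) //.
apply: le_lt_trans hn; rewrite ger0_norm //.
exact: le_trans (normr_ge0 _) (hb n).
Qed.

Definition cprod (al be : nat -> C) (n : nat) : C := \sum_(j < n.+1) al j * be (n - j)%N.

Lemma series0 (f : nat -> C) : series f 0 = 0.
Proof. by rewrite /series /= big_geq. Qed.

Lemma series_cprod (al be : nat -> C) N :
  series (cprod al be) N = \sum_(j < N) al j * series be (N - j)%N.
Proof.
elim: N => [|N IH]; first by rewrite series0 big_ord0.
rewrite seriesSr IH.
have -> : \sum_(j < N.+1) al j * series be (N.+1 - j)%N =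
   \sum_(j < N.+1) al j * series be (N - j)%N + \sum_(j < N.+1) al j * be (N - j)%N.
  rewrite -big_split /=; apply: eq_bigr => j _.
  by rewrite subSn ?seriesSr ?mulrDr // -ltnS.
by rewrite big_ord_recr /= subnn series0 mulr0 addr0.
Qed.

Lemma quarterC : ((4^-1 : R)%:C) = 4^-1 :> C.
Proof. by rewrite fmorphV rmorph_nat. Qed.

Lemma nsq_bound (s : C) N : 0 <= s -> s <= 1/16 -> s ^+ N * (N * N)%:R <= (4^-1) ^+ N.
Proof.
move=> s0 s1.
apply: (@le_trans _ _ ((1/16) ^+ N * (2 ^ N * 2 ^ N)%:R)).
  apply: ler_pM.
  - exact: exprn_ge0.
  - exact: ler0n.
  - by apply: lerXn2r => //; rewrite nnegrE // (le_trans s0 s1).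
  - by rewrite ler_nat leq_mul // ltnW // ltn_expl.
rewrite natrM natrX -exprMn -exprMn.
have -> : (1 / 16 * (2 * 2) : C) = 4^-1 by field.
by [].
Qed.

Lemma cauchy_prod (al be : nat -> C) (A B s la lb : C) :
  0 <= A -> 0 <= B -> 0 <= s -> s <= 1/16 ->
  (forall j, `|al j| <= A * s ^+ j) -> (forall m, `|be m| <= B * s ^+ m) ->
  series al @ \oo --> la -> series be @ \oo --> lb ->
  series (cprod al be) @ \oo --> la * lb.
Proof.
move=> A0 B0 s0 s1 ha hb cva cvb.
have s1' : s <= 1 by apply: le_trans s1 _; rewrite ler_pdivrMr ?mul1r ?ler1n //.
pose err := fun N => \sum_(j < N) al j * (series be N - series be (N - j)%N).
have E : series (cprod al be) = (fun N => series al N * series be N - err N).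
  apply: funext => N; rewrite series_cprod /err.
  rewrite [in series al N]seriesEord /= mulr_suml -sumrB.
  by apply: eq_bigr => j _; ring.
have hD N j : (j <= N)%N -> `|series be N - series be (N - j)%N| <= B * s ^+ (N - j) *+ j.
  move=> hj; rewrite sub_series_geq ?leq_subr //.
  apply: le_trans (ler_norm_sum _ _ _) _.
  rewrite -[in X in _ <= _ *+ X](subKn hj) -sumr_const_nat.
  apply: ler_sum_nat => m /andP[h1 h2].
  apply: le_trans (hb m) _.
  apply: ler_wpM2l => //.
  exact: ler_wiXn2l.
have herr : err @ \oo --> 0.
  apply: (cvg_boundC _ _ (fun N => A * B * (4^-1) ^+ N)).
  - rewrite -(mulr0 (A * B)); apply: cvgMl_tmp.
    rewrite -quarterC; apply: cvg_expC.
    by rewrite invr_ge0 ler0n /= invf_lt1 // ltr1n.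
  - move=> N; rewrite subr0 /err.
    apply: le_trans (ler_norm_sum _ _ _) _.
    apply: (@le_trans _ _ (\sum_(j < N) A * B * s ^+ N *+ N)).
      apply: ler_sum => j _.
      have hj : (j <= N)%N by apply: ltnW.
      rewrite normrM.
      apply: le_trans (ler_pM (normr_ge0 _) (normr_ge0 _) (ha j) (hD N j hj)) _.
      have e : s ^+ N = s ^+ j * s ^+ (N - j) by rewrite -exprD subnKC.
      rewrite (_ : A * s ^+ j * (B * s ^+ (N - j) *+ j) = A * B * s ^+ N *+ j); last by rewrite e; ring.
      apply: ler_wpMn2l => //.
      by rewrite !mulr_ge0 // exprn_ge0.
    rewrite sumr_const card_ord.
    rewrite (_ : A * B * s ^+ N *+ N *+ N = A * B * (s ^+ N * (N * N)%:R)); last by rewrite natrM; ring.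
    by apply: ler_wpM2l; [exact: mulr_ge0 | exact: nsq_bound].
have H := cvgB (cvgM cva cvb) herr.
rewrite subr0 in H.
rewrite E; exact: H.
Qed.

Lemma le_sum_term (f : nat -> C) (m0 i : nat) : (i <= m0)%N ->
  `|f i| <= \sum_(j < m0.+1) `|f j|.
Proof.
move=> hi; rewrite (bigD1 (Ordinal (hi : (i < m0.+1)%N))) //= lerDl.
by apply: sumr_ge0 => j _; exact: normr_ge0.
Qed.

Lemma geo_from_ratio (f : nat -> C) (L : C) (m0 : nat) : 1 <= L ->
  (forall m, (m0 <= m)%N -> `|f m.+1| <= L * `|f m|) ->
  forall m, `|f m| <= (\sum_(j < m0.+1) `|f j|) * L ^+ m.
Proof.
move=> L1 hr.
have K0 : 0 <= \sum_(j < m0.+1) `|f j| by apply: sumr_ge0 => j _; exact: normr_ge0.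
have L0 : 0 <= L by apply: le_trans L1; exact: ler01.
elim=> [|m IH]; first by rewrite expr0 mulr1 le_sum_term.
case: (leqP m0 m) => hm.
  apply: le_trans (hr m hm) _.
  rewrite exprS mulrCA; exact: ler_wpM2l.
apply: le_trans (le_sum_term _ _ _ hm) _.
by apply: ler_peMr => //; exact: exprn_ege1.
Qed.

Lemma ee_bound (q : C) j : `|ee q j| <= `|q| ^+ j.
Proof.
rewrite /ee normrM normrX normfV (ger0_norm (ler0n _ _)).
rewrite ler_pdivrMr ?ltr0n ?fact_gt0 //; apply: ler_peMr.
  by rewrite exprn_ge0 ?normr_ge0.
by rewrite ler1n fact_gt0.
Qed.

Lemma normr_natC (m : nat) : `|(m%:R : C)| = m%:R.
Proof. by rewrite ger0_norm ?ler0n. Qed.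

Lemma archC (x : C) : exists m0 : nat, (1 <= m0)%N /\ 2 * `|x| <= m0%:R.
Proof.
exists (Num.Def.trunc (2 * complex.Re `|x|)).+1; split => //.
have h := truncnS_gt (2 * complex.Re `|x|).
have e : `|x| = (complex.Re `|x|)%:C by rewrite RRe_real // normr_real.
rewrite e -!(rmorph_nat (real_complex R)) -rmorphM /= lecR.
exact: ltW.
Qed.

Lemma tt_bound a b c : (forall k : nat, c != - k%:R) ->
  exists K L : C, [/\ 0 <= K, 1 <= L & forall m, `|tt a b c m| <= K * L ^+ m].
Proof.
move=> hc; have hp := poch_neq0 c hc.
pose L : C := (1 + `|a|) * (2 * (1 + `|b|)).
have a1 : 1 <= 1 + `|a| by rewrite lerDl.
have b1 : 1 <= 1 + `|b| by rewrite lerDl.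
have L1 : 1 <= L.
  rewrite /L mulr_ege1 // mulr_ege1 // ler1n //.
have [m0 [m01 hm0]] := archC c.
exists (\sum_(j < m0.+1) `|tt a b c j|), L; split => //.
  by apply: sumr_ge0 => j _; exact: normr_ge0.
apply: geo_from_ratio => // m hm.
have m1 : 1 <= (m%:R : C) by rewrite ler1n (leq_trans m01 hm).
have hmc : m%:R + c != 0 by rewrite addrC addr_eq0 hc.
have E := ttS a b c m (hp m.+1).
have D0 : 0 < `|m%:R + 1| * `|m%:R + c| :> C.
  by rewrite mulr_gt0 // normr_gt0 // natr1 pnatr_eq0.
have E' : `|tt a b c m.+1| * (`|m%:R + 1| * `|m%:R + c|) =
    `|m%:R + a| * `|m%:R + b| * `|tt a b c m|.
  by rewrite -!normrM E.
rewrite -(ler_pM2r D0) E' [L * _ * _]mulrAC.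
apply: ler_wpM2r; first exact: normr_ge0.
rewrite /L mulrACA.
have h1 : `|m%:R + a| <= (1 + `|a|) * `|m%:R + 1|.
  rewrite natr1 normr_natC -natr1.
  apply: le_trans (ler_normD _ _) _; rewrite normr_natC.
  rewrite -subr_ge0.
  have -> : (1 + `|a|) * (m%:R + 1) - (m%:R + `|a|) = 1 + `|a| * m%:R by ring.
  by rewrite addr_ge0 ?mulr_ge0 ?normr_ge0 ?ler0n.
have h2 : `|m%:R + b| <= 2 * (1 + `|b|) * `|m%:R + c|.
  apply: le_trans (ler_normD _ _) _; rewrite normr_natC.
  have hmb : m%:R + `|b| <= (1 + `|b|) * m%:R.
    rewrite -subr_ge0.
    have -> : (1 + `|b|) * m%:R - (m%:R + `|b|) = `|b| * (m%:R - 1) by ring.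
    by rewrite mulr_ge0 ?normr_ge0 // subr_ge0.
  have hmc2 : (m%:R : C) <= 2 * `|m%:R + c|.
    have h3 := lerB_normD (m%:R : C) c.
    rewrite normr_natC in h3.
    have h4 : 2 * `|c| <= m%:R by apply: le_trans hm0 _; rewrite ler_nat.
    apply: (@le_trans _ _ (2 * (m%:R - `|c|))); last by apply: ler_wpM2l.
    rewrite -subr_ge0.
    have -> : 2 * (m%:R - `|c|) - m%:R = m%:R - 2 * `|c| by ring.
    by rewrite subr_ge0.
  apply: le_trans hmb _.
  rewrite -mulrA mulrCA; apply: ler_wpM2l => //.
apply: ler_pM => //; exact: normr_ge0.
Qed.

Lemma geo2 (rho : C) m : 0 <= rho -> rho <= 1/2 -> \sum_(i < m) rho ^+ i <= 2.
Proof.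
move=> r0 r1.
suff : \sum_(i < m) rho ^+ i <= 2 - 2 * rho ^+ m.
  move=> h; apply: le_trans h _; rewrite lerBlDr lerDl mulr_ge0 // exprn_ge0 //.
elim: m => [|m IH]; first by rewrite big_ord0 expr0 mulr1 subrr.
rewrite big_ord_recl expr0.
have -> : \sum_(i < m) rho ^+ (bump 0 i) = rho * \sum_(i < m) rho ^+ i.
  by rewrite mulr_sumr; apply: eq_bigr => i _; rewrite /bump /= add1n exprS.
apply: le_trans (_ : 1 + rho * (2 - 2 * rho ^+ m) <= _).
  by rewrite lerD2l; apply: ler_wpM2l.
rewrite -subr_ge0.
have -> : 2 - 2 * rho ^+ m.+1 - (1 + rho * (2 - 2 * rho ^+ m)) = 1 - 2 * rho.
  by rewrite exprS; ring.
rewrite subr_ge0; apply: le_trans (ler_wpM2l _ r1) _ => //.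
by rewrite mul1r divff // pnatr_eq0.
Qed.

Lemma uniq_coef (w : nat -> C) (r : C) : 0 < r ->
  (forall s : C, 0 < s -> s <= r -> series (fun n => w n * s ^+ n) @ \oo --> 0) ->
  forall n, w n = 0.
Proof.
move=> r0 hs.
have [K [K0 hK]] : exists K : C, 0 <= K /\ forall n, `|w n| * r ^+ n <= K.
  have h := cvg_series_cvg_0 (cvgP _ (hs r r0 (lexx r))).
  move/cvgr0_norm_lt: h => /(_ _ ltr01) [N _ hN].
  have S0 : 0 <= \sum_(n < N) `|w n| * r ^+ n.
    by apply: sumr_ge0 => n _; rewrite mulr_ge0 ?normr_ge0 ?exprn_ge0 ?ltW.
  exists (1 + \sum_(n < N) `|w n| * r ^+ n); split; first by rewrite addr_ge0.
  move=> n; case: (ltnP n N) => hn.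
    apply: le_trans (_ : _ <= \sum_(n < N) `|w n| * r ^+ n) _; last by rewrite lerDr.
    rewrite (bigD1 (Ordinal hn)) //= lerDl.
    by apply: sumr_ge0 => i _; rewrite mulr_ge0 ?normr_ge0 ?exprn_ge0 ?ltW.
  have := hN n hn; rewrite /= normrM normrX (ger0_norm (ltW r0)) => h1.
  apply: le_trans (ltW h1) _; by rewrite lerDl.
elim/ltn_ind => k IH.
apply/eqP; apply/negPn/negP => hwk.
set x := `|w k|.
have x0 : 0 < x by rewrite normr_gt0.
have r2 : 0 < r / 2 by rewrite divr_gt0 ?ltr0n.
have est : forall s, 0 < s -> s <= r / 2 -> x * s ^+ k <= 2 * K * (s / r) ^+ k.+1.
  move=> s s0 s1.
  have sr : s <= r.
    apply: le_trans s1 _; rewrite ler_pdivrMr ?ltr0n //.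
    by apply: ler_peMr; [exact: ltW | rewrite ler1n].
  set rho := s / r.
  have rho0 : 0 <= rho by rewrite divr_ge0 ?ltW.
  have rho1 : rho <= 1/2.
    by rewrite /rho ler_pdivrMr // mul1r mulrC.
  have srho : s = rho * r by rewrite /rho divfK // gt_eqF.
  set f := fun n => w n * s ^+ n.
  apply/ler_addgt0Pr => e e0.
  move/cvgr0_norm_lt: (hs s s0 sr) => /(_ _ e0) [N0 _ hN0].
  set N := maxn N0 k.+1.
  have hSN := hN0 N (leq_maxl _ _).
  have eq : series f N = w k * s ^+ k + \sum_(k.+1 <= n < N) f n.
    rewrite -[series f N](subrK (series f k.+1)) sub_series_geq ?leq_maxr //.
    rewrite seriesSr.
    have -> : series f k = 0.
      by rewrite seriesEord /= big1 // => i _; rewrite /f IH // mul0r.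
    by rewrite add0r addrC.
  have tail : `|\sum_(k.+1 <= n < N) f n| <= 2 * K * rho ^+ k.+1.
    apply: le_trans (ler_norm_sum _ _ _) _.
    apply: (@le_trans _ _ (\sum_(k.+1 <= n < N) K * rho ^+ n)).
      apply: ler_sum_nat => n _.
      rewrite /f normrM normrX (ger0_norm (ltW s0)) srho exprMn mulrCA mulrC.
      by apply: ler_wpM2r; [exact: exprn_ge0 | exact: hK].
    rewrite -mulr_sumr -[k.+1]add0n big_addn big_mkord.
    have -> : \sum_(i < N - k.+1) rho ^+ (i + k.+1) = (\sum_(i < N - k.+1) rho ^+ i) * rho ^+ k.+1.
      by rewrite mulr_suml; apply: eq_bigr => i _; rewrite exprD.
    rewrite -mulrA [2 * _]mulrC -mulrA; apply: ler_wpM2l => //.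
    rewrite mulrC; apply: ler_wpM2r; first exact: exprn_ge0.
    exact: geo2.
  have -> : x * s ^+ k = `|w k * s ^+ k| by rewrite normrM normrX (ger0_norm (ltW s0)).
  have -> : w k * s ^+ k = series f N - \sum_(k.+1 <= n < N) f n by rewrite eq addrK.
  apply: le_trans (ler_normB _ _) _.
  rewrite addrC; apply: lerD => //; exact: ltW.
set c := 2 * K / r ^+ k.+1.
have c0 : 0 <= c.
  rewrite /c; apply: divr_ge0; first by apply: mulr_ge0.
  by apply: exprn_ge0; exact: ltW.
have est2 : forall s, 0 < s -> s <= r / 2 -> x <= c * s.
  move=> s s0 s1; have := est s s0 s1.
  have -> : 2 * K * (s / r) ^+ k.+1 = c * s * s ^+ k.
    rewrite /c expr_div_n exprS.
    have rn0 : r != 0 by rewrite gt_eqF.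
    by field; rewrite expf_neq0.
  by rewrite (ler_pM2r (exprn_gt0 _ s0)).
set d := x + c * (r / 2).
have d0 : 0 < d.
  apply: lt_le_trans x0 _; rewrite /d lerDl; apply: mulr_ge0 => //; exact: ltW.
set s := r / 2 * x / d.
have s0 : 0 < s by rewrite /s; apply: divr_gt0 => //; apply: mulr_gt0.
have s1 : s <= r / 2.
  rewrite /s ler_pdivrMr //; apply: ler_wpM2l; first exact: ltW.
  rewrite /d lerDl; apply: mulr_ge0 => //; exact: ltW.
have hlt : c * s < x.
  rewrite /s mulrA ltr_pdivrMr // /d mulrDr -subr_gt0.
  have -> : x * x + x * (c * (r / 2)) - c * (r / 2 * x) = x * x by ring.
  by apply: mulr_gt0.
by have := le_lt_trans (est2 s s0 s1) hlt; rewrite ltxx.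
Qed.

Lemma Nexp2 (p : C) K : (- p) ^+ (2 * K) = p ^+ (2 * K).
Proof. by rewrite exprM sqrrN -exprM. Qed.

Lemma Nexp2S (p : C) K : (- p) ^+ (2 * K).+1 = - p ^+ (2 * K).+1.
Proof. by rewrite exprS Nexp2 mulNr -exprS. Qed.

Lemma ccosh_eq (p z E1 E2 : C) :
  series (fun j => ee p j * z ^+ j) @ \oo --> E1 ->
  series (fun j => ee (- p) j * z ^+ j) @ \oo --> E2 ->
  ccosh (p * z) = (E1 + E2) / 2.
Proof.
move=> h1 h2.
pose g := fun j => (ee p j * z ^+ j + ee (- p) j * z ^+ j) / 2.
have hg : series g @ \oo --> (E1 + E2) / 2.
  have -> : series g = (fun N => (series (fun j => ee p j * z ^+ j) N
                                 + series (fun j => ee (- p) j * z ^+ j) N) / 2).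
    apply: funext => N; rewrite !seriesEord /= -big_split /= mulr_suml.
    by [].
  exact: cvgMr_tmp (cvgD h1 h2).
have hc : series (fun k => (p * z) ^+ (2 * k) / (2 * k)`!%:R) = series g \o muln 2.
  apply: funext => K; rewrite /=.
  elim: K => [|K IH]; first by rewrite muln0 !series0.
  rewrite seriesSr IH mulnSr addn2 !seriesSr -addrA; congr (_ + _).
  rewrite /g /ee Nexp2 Nexp2S.
  by rewrite exprMn; field; rewrite !fact_neq0.
rewrite /ccosh hc; apply: cvg_lim; first exact: norm_hausdorff.
exact: (cvg_comp (muln 2) (series g) (cvg_mulnl 2 isT) hg).
Qed.

Lemma geo_cvgC (w : nat -> C) (A s : C) : 0 <= A -> 0 <= s -> s < 1 ->
  (forall n, `|w n| <= A * s ^+ n) -> exists l : C, series w @ \oo --> l.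
Proof.
move=> A0 s0 s1 hw.
have eA : A = (complex.Re A)%:C by rewrite RRe_real // ger0_real.
have es : s = (complex.Re s)%:C by rewrite RRe_real // ger0_real.
apply: (geo_cvg w (complex.Re A) (complex.Re s)).
  by rewrite -lecR -ltcR -es s1 andbT.
by move=> n; rewrite rmorphM rmorphXn /= -eA -es.
Qed.

Definition vv (a b c p : C) (n : nat) : C := (yy a b c p n + yy a b c (- p) n) / 2.

Lemma series_v a b c p : (forall k : nat, c != - k%:R) ->
  exists r : C, [/\ 0 < r, r < 1 & forall z : C, `|z| <= r ->
    series (fun n => vv a b c p n * z ^+ n) @ \oo --> ccosh (p * z) * hypF a b c z].
Proof.
move=> hc.
have [Kt [Lt [K0 L1 hT]]] := tt_bound a b c hc.
set M := 1 + `|p| + Lt.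
have L0 : 0 <= Lt by apply: le_trans L1; exact: ler01.
have M1 : 1 <= M by rewrite /M -addrA lerDl addr_ge0 ?normr_ge0.
have M0 : 0 < M by apply: lt_le_trans M1; exact: ltr01.
exists (1 / (16 * M)); split.
- by apply: divr_gt0 => //; apply: mulr_gt0.
- rewrite mul1r invf_lt1 ?mulr_gt0 //.
  apply: lt_le_trans (_ : 1 < 16 * 1) _; first by rewrite mulr1 ltr1n.
  by apply: ler_wpM2l.
move=> z hz.
set s := M * `|z|.
have s0 : 0 <= s by rewrite mulr_ge0 ?normr_ge0 // ltW.
have s16 : s <= 1 / 16.
  rewrite /s; apply: le_trans (ler_wpM2l (ltW M0) hz) _.
  have Mn0 : M != 0 by rewrite gt_eqF.
  by rewrite (_ : M * (1 / (16 * M)) = 1 / 16) //; field.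
have s1 : s < 1.
  apply: le_lt_trans s16 _.
  by rewrite mul1r invf_lt1 ?ltr0n // ltr1n.
have pM : `|p| <= M by rewrite /M -addrA addrCA lerDl addr_ge0 ?normr_ge0.
have LM : Lt <= M by rewrite /M lerDr addr_ge0 ?normr_ge0.
have ha q : `|q| = `|p| -> forall j, `|ee q j * z ^+ j| <= 1 * s ^+ j.
  move=> hq j; rewrite mul1r normrM normrX.
  apply: le_trans (ler_wpM2r (exprn_ge0 _ (normr_ge0 _)) (ee_bound q j)) _.
  rewrite hq -exprMn /s; apply: lerXn2r.
  - by rewrite nnegrE mulr_ge0 ?normr_ge0.
  - by rewrite nnegrE mulr_ge0 ?normr_ge0 // ltW.
  - by apply: ler_wpM2r => //; exact: normr_ge0.
have hb m : `|tt a b c m * z ^+ m| <= Kt * s ^+ m.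
  rewrite normrM normrX.
  apply: le_trans (ler_wpM2r (exprn_ge0 _ (normr_ge0 _)) (hT m)) _.
  rewrite -mulrA -exprMn; apply: ler_wpM2l => //; apply: lerXn2r.
  - by rewrite nnegrE mulr_ge0 ?normr_ge0.
  - by rewrite nnegrE mulr_ge0 ?normr_ge0 // ltW.
  - by apply: ler_wpM2r => //; exact: normr_ge0.
have [E1 h1] := geo_cvgC (fun j => ee p j * z ^+ j) 1 s ler01 s0 s1 (ha p erefl).
have [E2 h2] := geo_cvgC (fun j => ee (- p) j * z ^+ j) 1 s ler01 s0 s1 (ha (- p) (normrN p)).
have [T hT'] := geo_cvgC (fun m => tt a b c m * z ^+ m) Kt s K0 s0 s1 hb.
have hF : hypF a b c z = T.
  by rewrite /hypF; apply: cvg_lim; [exact: norm_hausdorff | exact: hT'].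
have hcosh := ccosh_eq _ _ _ _ h1 h2.
have c1 := cauchy_prod _ _ _ _ _ _ _ ler01 K0 s0 s16 (ha p erefl) hb h1 hT'.
have c2 := cauchy_prod _ _ _ _ _ _ _ ler01 K0 s0 s16 (ha (- p) (normrN p)) hb h2 hT'.
have eqc q n : cprod (fun j => ee q j * z ^+ j) (fun m => tt a b c m * z ^+ m) n
    = yy a b c q n * z ^+ n.
  rewrite /cprod /yy mulr_suml; apply: eq_bigr => j _.
  have hj : (j <= n)%N by rewrite -ltnS.
  have e : z ^+ n = z ^+ j * z ^+ (n - j) by rewrite -exprD subnKC.
  by rewrite e; ring.
have -> : series (fun n => vv a b c p n * z ^+ n) =
   (fun N => (series (cprod (fun j => ee p j * z ^+ j) (fun m => tt a b c m * z ^+ m)) N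
     + series (cprod (fun j => ee (- p) j * z ^+ j) (fun m => tt a b c m * z ^+ m)) N) / 2).
  apply: funext => N; rewrite !seriesEord /= -big_split /= mulr_suml.
  by apply: eq_bigr => n _; rewrite !eqc /vv; ring.
rewrite hcosh hF.
have -> : (E1 + E2) / 2 * T = (E1 * T + E2 * T) / 2 by ring.
exact: cvgMr_tmp (cvgD c1 c2).
Qed.

Lemma deltaN (i : nat) (a b c p : C) (n : nat) : delta i a b c (- p) n = delta i a b c p n.
Proof.
have e2 : (- p) ^+ 2 = p ^+ 2 by ring.
have e4 : (- p) ^+ 4 = p ^+ 4 by ring.
have e6 : (- p) ^+ 6 = p ^+ 6 by ring.
case: i => [|[|[|[|[|[|[|[|[|[|i]]]]]]]]]] //=;
  by rewrite /delta0 /delta1 /delta2 /delta3 /delta4 /delta5 /delta6 /delta7 /delta8 /delta9 ?e2 ?e4 ?e6.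
Qed.

Lemma vv_rec (a b c p : C) (n : nat) : (forall k : nat, c != - k%:R) -> c != 2 -> (9 <= n)%N ->
  vv a b c p n.+1 = \sum_(i < 10) delta i a b c p n * vv a b c p (n - i)%N.
Proof.
move=> hc hc2 hn; have hp := poch_neq0 c hc.
have hc0 : c != 0 by have := hc 0%N; rewrite mulr0n oppr0.
have e : (n%:R : C) = (n.-1)%:R + 1 by rewrite natr1 prednK // (leq_trans _ hn).
have h5 : c + n%:R - 1 != 0 by rewrite e addrA addrK addr_eq0 hc.
have h6 : c + n%:R != 0 by rewrite addr_eq0 hc.
have r1 := rec_main a b c p (yy a b c p) n hn hc2 hc0 h5 h6 (yyQ a b c p hp).
have r2 := rec_main a b c (- p) (yy a b c (- p)) n hn hc2 hc0 h5 h6 (yyQ a b c (- p) hp).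
rewrite /vv r1 r2 -big_split /= mulr_suml; apply: eq_bigr => i _.
by rewrite deltaN; ring.
Qed.

Lemma poch0 (x : C) : poch x 0 = 1.
Proof. by rewrite /poch big_ord0. Qed.

Lemma poch1 (x : C) : poch x 1 = x.
Proof. by rewrite /poch big_ord1 addr0. Qed.


Ltac initv hp hc0 := rewrite /vv /yy !big_ord_recr !big_ord0 /= /ee /tt ?subSS ?subn0 ?subnn ?poch0 ?poch1 ?factS ?fact0 ?natrM; field; rewrite ?hp ?hc0.

Lemma main_thm (a b c p : C) (u : nat -> C) :
  (forall k : nat, c != - k%:R) ->
  c != 2 ->
  (forall z : R[i], `|z| < 1 ->
     series (fun n : nat => u n * z ^+ n) @ \oo --> ccosh (p * z) * hypF a b c z) ->
  (u 0%N = 1 /\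
      u 1%N = a * b / c /\
      u 2%N = poch a 2 * poch b 2 / (2 * poch c 2) + p ^+ 2 / 2 /\
      u 3%N = a * b * p ^+ 2 / (2 * c) + poch a 3 * poch b 3 / (6 * poch c 3) /\
      u 4%N = poch a 2 * poch b 2 * p ^+ 2 / (4 * poch c 2)
              + poch a 4 * poch b 4 / (24 * poch c 4) + p ^+ 4 / 24 /\
      u 5%N = a * b * p ^+ 4 / (24 * c)
              + poch a 3 * poch b 3 * p ^+ 2 / (12 * poch c 3)
              + poch a 5 * poch b 5 / (120 * poch c 5) /\
      u 6%N = poch a 2 * poch b 2 * p ^+ 4 / (48 * poch c 2)
              + poch a 4 * poch b 4 * p ^+ 2 / (48 * poch c 4)
              + poch a 6 * poch b 6 / (720 * poch c 6) + p ^+ 6 / 720 /\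
      u 7%N = a * b * p ^+ 6 / (720 * c)
              + poch a 3 * poch b 3 * p ^+ 4 / (144 * poch c 3)
              + poch a 5 * poch b 5 * p ^+ 2 / (240 * poch c 5)
              + poch a 7 * poch b 7 / (5040 * poch c 7) /\
      u 8%N = poch a 2 * poch b 2 * p ^+ 6 / (1440 * poch c 2)
              + poch a 4 * poch b 4 * p ^+ 4 / (576 * poch c 4)
              + poch a 6 * poch b 6 * p ^+ 2 / (1440 * poch c 6)
              + poch a 8 * poch b 8 / ((8`!)%:R * poch c 8) + p ^+ 8 / (8`!)%:R /\
      u 9%N = a * b * p ^+ 8 / ((8`!)%:R * c)
              + poch a 3 * poch b 3 * p ^+ 6 / (4320 * poch c 3)
              + poch a 5 * poch b 5 * p ^+ 4 / (2880 * poch c 5)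
              + poch a 7 * poch b 7 * p ^+ 2 / (10080 * poch c 7)
              + poch a 9 * poch b 9 / ((9`!)%:R * poch c 9)
    /\ forall n : nat, (9 <= n)%N ->
        u n.+1 = \sum_(i < 10) delta i a b c p n * u (n - i)%N).
Proof.
move=> hc hc2 H.
have hp := poch_neq0 c hc.
have hc0 : c != 0 by have := hc 0%N; rewrite mulr0n oppr0.
have [r [r0 r1 hv]] := series_v a b c p hc.
have huv : forall n, u n - vv a b c p n = 0.
  apply: (uniq_coef (fun n => u n - vv a b c p n) r r0) => s s0 sr.
  have hs1 : `|s| < 1 by rewrite ger0_norm ?ltW //; exact: le_lt_trans sr r1.
  have hsr : `|s| <= r by rewrite ger0_norm // ltW.
  have e : series (fun n => (u n - vv a b c p n) * s ^+ n) =
      (fun N => series (fun n => u n * s ^+ n) N - series (fun n => vv a b c p n * s ^+ n) N).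
    by apply: funext => N; rewrite !seriesEord /= -sumrB; apply: eq_bigr => n _; ring.
  rewrite e -(subrr (ccosh (p * s) * hypF a b c s)).
  exact: (cvgB (H s hs1) (hv s hsr)).
have -> : u = vv a b c p by apply: funext => n; apply/eqP; rewrite -subr_eq0 huv.
repeat split; try by initv hp hc0.
move=> n hn; exact: vv_rec.
Qed.
End Proof.

Theorem theorem3p11 (R : realType) (a b c p : R[i]) (u : nat -> R[i]) :
  (forall k : nat, c != - k%:R) ->
  c != 2 ->
  (forall z : R[i], `|z| < 1 ->
     series (fun n : nat => u n * z ^+ n) @ \oo --> ccosh (p * z) * hypF a b c z) ->
  (u 0%N = 1 /\
      u 1%N = a * b / c /\
      u 2%N = poch a 2 * poch b 2 / (2 * poch c 2) + p ^+ 2 / 2 /\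
      u 3%N = a * b * p ^+ 2 / (2 * c) + poch a 3 * poch b 3 / (6 * poch c 3) /\
      u 4%N = poch a 2 * poch b 2 * p ^+ 2 / (4 * poch c 2)
              + poch a 4 * poch b 4 / (24 * poch c 4) + p ^+ 4 / 24 /\
      u 5%N = a * b * p ^+ 4 / (24 * c)
              + poch a 3 * poch b 3 * p ^+ 2 / (12 * poch c 3)
              + poch a 5 * poch b 5 / (120 * poch c 5) /\
      u 6%N = poch a 2 * poch b 2 * p ^+ 4 / (48 * poch c 2)
              + poch a 4 * poch b 4 * p ^+ 2 / (48 * poch c 4)
              + poch a 6 * poch b 6 / (720 * poch c 6) + p ^+ 6 / 720 /\
      u 7%N = a * b * p ^+ 6 / (720 * c)
              + poch a 3 * poch b 3 * p ^+ 4 / (144 * poch c 3)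
              + poch a 5 * poch b 5 * p ^+ 2 / (240 * poch c 5)
              + poch a 7 * poch b 7 / (5040 * poch c 7) /\
      u 8%N = poch a 2 * poch b 2 * p ^+ 6 / (1440 * poch c 2)
              + poch a 4 * poch b 4 * p ^+ 4 / (576 * poch c 4)
              + poch a 6 * poch b 6 * p ^+ 2 / (1440 * poch c 6)
              + poch a 8 * poch b 8 / ((8`!)%:R * poch c 8) + p ^+ 8 / (8`!)%:R /\
      u 9%N = a * b * p ^+ 8 / ((8`!)%:R * c)
              + poch a 3 * poch b 3 * p ^+ 6 / (4320 * poch c 3)
              + poch a 5 * poch b 5 * p ^+ 4 / (2880 * poch c 5)
              + poch a 7 * poch b 7 * p ^+ 2 / (10080 * poch c 7)
              + poch a 9 * poch b 9 / ((9`!)%:R * poch c 9)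
    /\ forall n : nat, (9 <= n)%N ->
        u n.+1 = \sum_(i < 10) delta i a b c p n * u (n - i)%N).
Proof. exact: main_thm. Qed.
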